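(* Let $\alpha_{\mathsf{snr},n_t}:=\int_0^{\sqrt{\mathsf{snr}}}\zeta_0(r)^{\frac{n_t-1}{2}}\zeta_2(r)^{\frac12}n_t r^{n_t-1}dr$. Then: (i) In the regime $n_t\,\mathsf{snr}\to0$, $\alpha_{\mathsf{snr},n_t}\sim\left(\frac2\pi\mathsf{snr}\right)^{n_t/2}$. (ii) In the regime $\mathsf{snr}/n_t\to\infty$, $$\alpha_{\mathsf{snr},n_t}\sim\begin{cases}\int_0^\infty\sqrt{\zeta_2(r)}\,dr,& n_t=1,\\ A_0^{\frac{n_t-1}{2}}A_2^{\frac12}\ln\mathsf{snr},& n_t=2,\\ \frac{2n_t}{n_t-2}A_0^{\frac{n_t-1}{2}}A_2^{\frac12}\,\mathsf{snr}^{\frac{n_t-2}{4}},& n_t\ge3.\end{cases}$$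
   Context: $\phi(t)=\frac{1}{\sqrt{2\pi}}e^{-t^2/2}$, $Q(x)=\int_x^\infty\phi(t)dt$, $\xi(s):=\frac{\phi^2(s)}{Q(s)(1-Q(s))}$, $\zeta_k(t):=\mathbb{E}[S^k\xi(tS)]$ for $S\sim\mathcal{N}(0,1)$, $k\in\mathbb{Z}$. $A_0:=\frac{1}{\sqrt{2\pi}}\int_{-\infty}^{\infty}\xi(u)du$ and $A_2:=\frac{1}{\sqrt{2\pi}}\int_{-\infty}^{\infty}\xi(u)u^2du$. $a\sim b$ means $a/b\to1$ in the indicated limit. *)

(* Defs.v *)
From Stdlib Require Import Reals.
From Coquelicot Require Import Coquelicot.
Open Scope R_scope.

Definition phi (t : R) : R := / sqrt (2 * PI) * exp (- t ^ 2 / 2).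

Definition Q (x : R) : R := RInt_gen phi (at_point x) (Rbar_locally p_infty).

Definition xi (s : R) : R := (phi s) ^ 2 / (Q s * (1 - Q s)).

Definition zeta (k : nat) (t : R) : R :=
  RInt_gen (fun s => s ^ k * xi (t * s) * phi s)
           (Rbar_locally m_infty) (Rbar_locally p_infty).

Definition A0 : R :=
  / sqrt (2 * PI) * RInt_gen xi (Rbar_locally m_infty) (Rbar_locally p_infty).
Definition A2 : R :=
  / sqrt (2 * PI) * RInt_gen (fun u => xi u * u ^ 2)
                      (Rbar_locally m_infty) (Rbar_locally p_infty).

(* alpha_{snr,n} = int_0^{sqrt snr} zeta0(r)^{(n-1)/2} zeta2(r)^{1/2} n r^{n-1} dr
   (zeta0 > 0, so zeta0^{(n-1)/2} = (sqrt zeta0)^(n-1)) *)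
Definition alpha (snr : R) (n : nat) : R :=
  RInt (fun r => sqrt (zeta 0 r) ^ (n - 1) * sqrt (zeta 2 r) * INR n * r ^ (n - 1))
       0 (sqrt snr).

(* Main.v *)
Require Import Defs.
From Stdlib Require Import Reals Lra Psatz.
From Coquelicot Require Import Coquelicot.
Open Scope R_scope.

Lemma exRc (f : R -> R) a b : (forall z, Rmin a b <= z <= Rmax a b -> continuous f z) -> ex_RInt f a b.
Proof. intros H. apply (ex_RInt_continuous (V:=R_CompleteNormedModule)). exact H. Qed.

Definition Cont0 (f : R -> R) := forall x, 0 <= x -> continuous f x.

Lemma Cont0_exRInt f b : Cont0 f -> 0 <= b -> ex_RInt f 0 b.
Proof.
  intros Hc Hb; apply exRc; intros z Hz; apply Hc.
  rewrite Rmin_left in Hz; lra.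
Qed.

Lemma Cont0_exRInt2 f a b : Cont0 f -> 0 <= a -> 0 <= b -> ex_RInt f a b.
Proof.
  intros Hc Ha Hb; apply exRc; intros z Hz; apply Hc.
  destruct Hz as [Hz _]; eapply Rle_trans; [|exact Hz].
  apply Rmin_glb; lra.
Qed.

Lemma cauchy_lim (F : R -> R) :
  (forall eps, 0 < eps -> exists M, forall x y, M < x -> M < y -> Rabs (F x - F y) < eps) ->
  exists l : R, is_lim F p_infty l.
Proof.
  intros H.
  assert (H1 : exists y : R, filterlim F (Rbar_locally p_infty) (locally y)).
  { apply (filterlim_locally_cauchy (U := R_CompleteSpace) (F := Rbar_locally p_infty)).
    intros eps. destruct (H eps (cond_pos eps)) as [M HM].
    exists (fun x => M < x). split.
    - exists M; auto.
    - intros u v Hu Hv. change (Rabs (F v - F u) < eps). apply HM; auto. }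
  destruct H1 as [y Hy]. exists y. exact Hy.
Qed.

Lemma bridge_p f a (l : R) :
  (forall b, a <= b -> ex_RInt f a b) ->
  is_lim (fun b => RInt f a b) p_infty l ->
  is_RInt_gen f (at_point a) (Rbar_locally p_infty) l.
Proof.
  intros Hex Hl.
  unfold is_RInt_gen.
  apply filterlimi_lim_ext_loc with (f := fun ab => RInt f (fst ab) (snd ab)).
  - apply (Filter_prod _ _ _ (fun x => x = a) (fun b => a < b)).
    + reflexivity.
    + exists a; auto.
    + intros x y -> Hy; simpl. apply RInt_correct, Hex; lra.
  - intros P HP.
    apply (Filter_prod _ _ _ (fun x => x = a) (fun b => P (RInt f a b))).
    + reflexivity.
    + apply Hl. exact HP.
    + intros x y -> Hy; exact Hy.
Qed.

Lemma bridge_m f b (l : R) :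
  (forall a, a <= b -> ex_RInt f a b) ->
  is_lim (fun a => RInt f a b) m_infty l ->
  is_RInt_gen f (Rbar_locally m_infty) (at_point b) l.
Proof.
  intros Hex Hl.
  unfold is_RInt_gen.
  apply filterlimi_lim_ext_loc with (f := fun ab => RInt f (fst ab) (snd ab)).
  - apply (Filter_prod _ _ _ (fun a => a < b) (fun x => x = b)).
    + exists b; auto.
    + reflexivity.
    + intros x y Hx ->; simpl. apply RInt_correct, Hex; lra.
  - intros P HP.
    apply (Filter_prod _ _ _ (fun a => P (RInt f a b)) (fun x => x = b)).
    + apply Hl. exact HP.
    + reflexivity.
    + intros x y Hx ->; exact Hx.
Qed.

Definition Ip (f : R -> R) : R := RInt_gen f (at_point 0) (Rbar_locally p_infty).
Definition Conv (f : R -> R) := Cont0 f /\ exists l : R, is_lim (fun b => RInt f 0 b) p_infty l.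

Lemma Ip_spec f (l : R) : Cont0 f -> is_lim (fun b => RInt f 0 b) p_infty l -> Ip f = l.
Proof.
  intros Hc Hl. unfold Ip. apply (is_RInt_gen_unique (V:=R_CompleteNormedModule)).
  apply bridge_p; auto. intros b Hb; apply Cont0_exRInt; auto.
Qed.

Lemma Ip_lim f : Conv f -> is_lim (fun b => RInt f 0 b) p_infty (Ip f).
Proof.
  intros [Hc [l Hl]]. rewrite (Ip_spec f l); auto.
Qed.

Lemma lim_p_eps F (l : R) : is_lim F p_infty l ->
  forall eps, 0 < eps -> exists M, forall x, M < x -> Rabs (F x - l) < eps.
Proof.
  intros Hl eps He.
  destruct (Hl (fun y => Rabs (y - l) < eps)) as [M HM].
  - exists (mkposreal eps He). intros y Hy. exact Hy.
  - exists M; auto.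
Qed.

Lemma RInt_le_dom f g a b : a <= b -> ex_RInt f a b -> ex_RInt g a b ->
  (forall x, a <= x <= b -> Rabs (f x) <= g x) -> Rabs (RInt f a b) <= RInt g a b.
Proof.
  intros Hab Hf Hg H.
  assert (H1 : RInt f a b <= RInt g a b).
  { apply RInt_le; auto. intros x Hx. specialize (H x ltac:(lra)). apply Rabs_le_between in H; lra. }
  assert (H2 : RInt (fun x => - g x) a b <= RInt f a b).
  { apply RInt_le; auto.
    - apply (ex_RInt_opp (V:=R_NormedModule)) in Hg. exact Hg.
    - intros x Hx. specialize (H x ltac:(lra)). apply Rabs_le_between in H; lra. }
  rewrite (RInt_opp (V:=R_CompleteNormedModule)) in H2 by auto.
  change (opp (RInt g a b)) with (- RInt g a b) in H2.
  apply Rabs_le; lra.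
Qed.

Lemma RInt_split0 f x y : Cont0 f -> 0 <= x -> 0 <= y ->
  RInt f 0 x - RInt f 0 y = RInt f y x.
Proof.
  intros Hc Hx Hy.
  rewrite <- (RInt_Chasles (V:=R_CompleteNormedModule) f 0 y x).
  - change (plus (RInt f 0 y) (RInt f y x)) with (RInt f 0 y + RInt f y x). ring.
  - apply Cont0_exRInt; auto.
  - apply Cont0_exRInt2; auto.
Qed.

Lemma Conv_dom f g : Cont0 f -> Conv g -> (forall x, 0 <= x -> Rabs (f x) <= g x) -> Conv f.
Proof.
  intros Hc [Hgc [lg Hlg]] Hd. split; auto.
  apply cauchy_lim. intros eps He.
  destruct (lim_p_eps _ _ Hlg (eps/2)) as [M HM]; [lra|].
  exists (Rmax M 0). intros x y Hx Hy.
  assert (HxM : M < x) by (eapply Rle_lt_trans; [apply Rmax_l | exact Hx]).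
  assert (HyM : M < y) by (eapply Rle_lt_trans; [apply Rmax_l | exact Hy]).
  assert (Hx0 : 0 < x) by (eapply Rle_lt_trans; [apply Rmax_r | exact Hx]).
  assert (Hy0 : 0 < y) by (eapply Rle_lt_trans; [apply Rmax_r | exact Hy]).
  specialize (HM x HxM) as H1. specialize (HM y HyM) as H2.
  rewrite RInt_split0 by (auto; lra).
  destruct (Rle_lt_dec y x) as [Hyx|Hxy].
  - eapply Rle_lt_trans. apply (RInt_le_dom f g y x); [lra | apply Cont0_exRInt2; auto; lra | apply Cont0_exRInt2; auto; lra | intros; apply Hd; lra].
    rewrite <- RInt_split0 by (auto; lra).
    apply Rabs_lt_between in H1; apply Rabs_lt_between in H2; lra.
  - assert (E : RInt f y x = - RInt f x y).
    { rewrite <- (RInt_split0 f y x), <- (RInt_split0 f x y); auto; lra. }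
    rewrite E, Rabs_Ropp.
    eapply Rle_lt_trans. apply (RInt_le_dom f g x y); [lra | apply Cont0_exRInt2; auto; lra | apply Cont0_exRInt2; auto; lra | intros; apply Hd; lra].
    rewrite <- RInt_split0 by (auto; lra).
    apply Rabs_lt_between in H1; apply Rabs_lt_between in H2; lra.
Qed.

Lemma cont_plus (f g : R -> R) x : continuous f x -> continuous g x -> continuous (fun y => f y + g y) x.
Proof. intros; apply (continuous_plus (V:=R_NormedModule)); auto. Qed.
Lemma cont_mult (f g : R -> R) x : continuous f x -> continuous g x -> continuous (fun y => f y * g y) x.
Proof. intros; apply (continuous_mult (K:=R_AbsRing)); auto. Qed.
Lemma cont_opp (f : R -> R) x : continuous f x -> continuous (fun y => - f y) x.
Proof. intros; apply (continuous_opp (V:=R_NormedModule)); auto. Qed.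
Lemma cont_minus (f g : R -> R) x : continuous f x -> continuous g x -> continuous (fun y => f y - g y) x.
Proof. intros; apply cont_plus; auto; apply cont_opp; auto. Qed.
Lemma cont_const (c : R) x : continuous (fun _ : R => c) x.
Proof. apply continuous_const. Qed.
Lemma cont_id x : continuous (fun y : R => y) x.
Proof. apply continuous_id. Qed.
Lemma cont_comp (f g : R -> R) x : continuous f x -> continuous g (f x) -> continuous (fun y => g (f y)) x.
Proof. intros; apply continuous_comp; auto. Qed.
Lemma cont_pow (f : R -> R) n x : continuous f x -> continuous (fun y => f y ^ n) x.
Proof. intros H; induction n; simpl. apply cont_const. apply cont_mult; auto. Qed.
Lemma cont_inv (f : R -> R) x : continuous f x -> f x <> 0 -> continuous (fun y => / f y) x.
Proof. intros; apply continuous_Rinv_comp; auto. Qed.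

Lemma cont_der (f : R -> R) x : ex_derive f x -> continuous f x.
Proof. intros H. apply (ex_derive_continuous (K:=R_AbsRing) (V:=R_NormedModule)). exact H. Qed.

Lemma Conv_Cont0 f : Conv f -> Cont0 f.
Proof. intros [H _]; exact H. Qed.

Lemma Ip_le f g : Conv f -> Conv g -> (forall x, 0 <= x -> f x <= g x) -> Ip f <= Ip g.
Proof.
  intros Hf Hg H.
  assert (Hfc := Conv_Cont0 f Hf). assert (Hgc := Conv_Cont0 g Hg).
  assert (Hloc : Rbar_locally' p_infty (fun y => RInt f 0 y <= RInt g 0 y)).
  { exists 0; intros y Hy. apply RInt_le.
    - lra.
    - apply Cont0_exRInt; auto; lra.
    - apply Cont0_exRInt; auto; lra.
    - intros; apply H; lra. }
  exact (is_lim_le_loc _ _ p_infty _ _ Hloc (Ip_lim f Hf) (Ip_lim g Hg)).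
Qed.

Lemma Conv_plus f g : Conv f -> Conv g -> Conv (fun x => f x + g x) /\ Ip (fun x => f x + g x) = Ip f + Ip g.
Proof.
  intros Hf Hg.
  assert (Hc : Cont0 (fun x => f x + g x)).
  { intros x Hx; apply cont_plus; [apply (Conv_Cont0 f)|apply (Conv_Cont0 g)]; auto. }
  assert (Hl : is_lim (fun b => RInt (fun x => f x + g x) 0 b) p_infty (Ip f + Ip g)).
  { apply is_lim_ext_loc with (f := fun b => RInt f 0 b + RInt g 0 b).
    - exists 0; intros y Hy.
      rewrite (RInt_plus (V:=R_CompleteNormedModule)); [reflexivity| |];
      apply Cont0_exRInt; try lra; apply Conv_Cont0; auto.
    - apply is_lim_plus'; apply Ip_lim; auto. }
  split.
  - split; auto. exists (Ip f + Ip g); auto.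
  - apply Ip_spec; auto.
Qed.

Lemma Conv_scal c f : Conv f -> Conv (fun x => c * f x) /\ Ip (fun x => c * f x) = c * Ip f.
Proof.
  intros Hf.
  assert (Hc : Cont0 (fun x => c * f x)).
  { intros x Hx; apply cont_mult; [apply cont_const|apply (Conv_Cont0 f)]; auto. }
  assert (Hl : is_lim (fun b => RInt (fun x => c * f x) 0 b) p_infty (c * Ip f)).
  { apply is_lim_ext_loc with (f := fun b => c * RInt f 0 b).
    - exists 0; intros y Hy.
      rewrite (RInt_scal (V:=R_CompleteNormedModule)); [reflexivity|].
      apply Cont0_exRInt; try lra; apply Conv_Cont0; auto.
    - apply (is_lim_scal_l _ c p_infty (Ip f)). apply Ip_lim; auto. }
  split.
  - split; auto. exists (c * Ip f); auto.
  - apply Ip_spec; auto.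
Qed.

Lemma Conv_ext f g : Conv f -> Cont0 g -> (forall x, 0 <= x -> f x = g x) -> Conv g /\ Ip g = Ip f.
Proof.
  intros Hf Hc He.
  assert (Hl : is_lim (fun b => RInt g 0 b) p_infty (Ip f)).
  { apply is_lim_ext_loc with (f := fun b => RInt f 0 b).
    - exists 0; intros y Hy. apply RInt_ext. intros x Hx.
      rewrite Rmin_left, Rmax_right in Hx by lra. apply He; lra.
    - apply Ip_lim; auto. }
  split.
  - split; auto. exists (Ip f); auto.
  - apply Ip_spec; auto.
Qed.

Lemma Ip_ge_RInt f b : Conv f -> (forall x, 0 <= x -> 0 <= f x) -> 0 <= b -> RInt f 0 b <= Ip f.
Proof.
  intros Hf Hp Hb.
  assert (Hle := is_lim_le_loc (fun _ => RInt f 0 b) (fun y => RInt f 0 y) p_infty (RInt f 0 b) (Ip f)).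
  apply Hle; clear Hle.
  - exists b; intros y Hy.
    assert (Hc := Conv_Cont0 f Hf).
    assert (E := RInt_split0 f y b Hc ltac:(lra) ltac:(lra)).
    assert (0 <= RInt f b y); [|lra].
    apply RInt_ge_0; [lra | apply Cont0_exRInt2; auto; lra | intros; apply Hp; lra].
  - apply is_lim_const.
  - apply Ip_lim; auto.
Qed.

Lemma Ip_ge0 f : Conv f -> (forall x, 0 <= x -> 0 <= f x) -> 0 <= Ip f.
Proof.
  intros Hf Hp. eapply Rle_trans; [|apply (Ip_ge_RInt f 0); auto; lra].
  rewrite RInt_point. right; reflexivity.
Qed.

Lemma is_lim_p_intro F (l : R) :
  (forall eps, 0 < eps -> exists M, forall x, M < x -> Rabs (F x - l) < eps) -> is_lim F p_infty l.
Proof.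
  intros H P [eps HP]. destruct (H eps (cond_pos eps)) as [M HM].
  exists M. intros x Hx. apply HP. exact (HM x Hx).
Qed.

Lemma is_lim_scale_p r : 0 < r -> is_lim (fun b => r * b) p_infty p_infty.
Proof.
  intros Hr P [M HM]. exists (M / r). intros x Hx. apply HM.
  apply (Rmult_lt_compat_l r) in Hx; auto. field_simplify in Hx; lra.
Qed.

Lemma is_lim_opp_m : is_lim (fun b => - b) m_infty p_infty.
Proof.
  intros P [M HM]. exists (- M). intros x Hx. apply HM. lra.
Qed.

Lemma solve_scale (r I J : R) : r * I = J -> r <> 0 -> I = / r * J.
Proof. intros H Hr. rewrite <- H. field. auto. Qed.

Lemma RInt_comp_scale f r b : 0 < r -> 0 <= b -> Cont0 f ->
  RInt (fun s => f (r * s)) 0 b = / r * RInt f 0 (r * b).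
Proof.
  intros Hr Hb Hc.
  assert (Hex : ex_RInt (fun s => f (r * s)) 0 b).
  { apply exRc. intros z Hz. rewrite Rmin_left, Rmax_right in Hz by lra.
    apply cont_comp. apply cont_mult; [apply cont_const|apply cont_id].
    apply Hc. nra. }
  assert (E := RInt_comp_lin (V:=R_CompleteNormedModule) f r 0 0 b).
  rewrite Rmult_0_r, !Rplus_0_r in E.
  assert (E' : RInt (fun y => scal r (f (r * y + 0))) 0 b = r * RInt (fun s => f (r * s)) 0 b).
  { rewrite (RInt_ext _ (fun y => scal r (f (r * y)))).
    - rewrite (RInt_scal (V:=R_CompleteNormedModule)) by exact Hex. reflexivity.
    - intros x _. rewrite Rplus_0_r. reflexivity. }
  assert (Hx2 : ex_RInt f 0 (r * b)) by (apply Cont0_exRInt; auto; nra).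
  specialize (E Hx2).
  assert (E2 : r * RInt (fun s => f (r*s)) 0 b = RInt f 0 (r*b)) by (rewrite <- E'; exact E).
  apply (solve_scale r); [exact E2 | lra].
Qed.

Lemma Conv_scale f r : Conv f -> 0 < r -> Conv (fun s => f (r * s)) /\ Ip (fun s => f (r * s)) = Ip f / r.
Proof.
  intros Hf Hr.
  assert (Hc : Cont0 (fun s => f (r * s))).
  { intros x Hx. apply cont_comp. apply cont_mult; [apply cont_const|apply cont_id].
    apply (Conv_Cont0 f Hf). nra. }
  assert (Hl : is_lim (fun b => RInt (fun s => f (r * s)) 0 b) p_infty (Ip f / r)).
  { apply is_lim_ext_loc with (f := fun b => / r * RInt f 0 (r * b)).
    - exists 0; intros y Hy. rewrite RInt_comp_scale; auto; try lra. apply Conv_Cont0; auto.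
    - replace (Ip f / r) with (/ r * Ip f) by (field; lra).
      apply (is_lim_scal_l _ (/ r) p_infty (Ip f)).
      apply (is_lim_comp (fun b => RInt f 0 b) (fun b => r * b) p_infty (Ip f) p_infty).
      + apply Ip_lim; auto.
      + apply is_lim_scale_p; auto.
      + exists 0; intros; discriminate. }
  split.
  - split; auto. exists (Ip f / r); auto.
  - apply Ip_spec; auto.
Qed.

Lemma Conv_d2 : Conv (fun x => / (1 + x) ^ 2) /\ Ip (fun x => / (1 + x) ^ 2) = 1.
Proof.
  assert (Hc : Cont0 (fun x => / (1 + x) ^ 2)).
  { intros x Hx. apply cont_der. auto_derive. nra. }
  assert (HR : forall b, 0 <= b -> RInt (fun x => / (1 + x) ^ 2) 0 b = 1 - / (1 + b)).
  { intros b Hb. apply is_RInt_unique.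
    replace (1 - / (1 + b)) with (minus ((fun x => - / (1 + x)) b) ((fun x => - / (1 + x)) 0))
      by (unfold minus, plus, opp; simpl; field; lra).
    apply (is_RInt_derive (V:=R_CompleteNormedModule) (fun x => - / (1 + x)) (fun x => / (1 + x) ^ 2)).
    - intros x Hx. rewrite Rmin_left, Rmax_right in Hx by lra.
      auto_derive. lra. field. lra.
    - intros x Hx. rewrite Rmin_left, Rmax_right in Hx by lra. apply Hc; lra. }
  assert (Hl : is_lim (fun b => RInt (fun x => / (1 + x) ^ 2) 0 b) p_infty 1).
  { apply is_lim_p_intro. intros eps He. exists (/ eps). intros x Hx.
    assert (Hx0 : 0 < x) by (apply Rlt_trans with (/ eps); auto; apply Rinv_0_lt_compat; auto).
    rewrite HR by lra.
    replace (1 - / (1 + x) - 1) with (- / (1 + x)) by ring.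
    rewrite Rabs_Ropp, Rabs_right.
    - apply Rinv_lt_contravar in Hx; [|apply Rmult_lt_0_compat; auto; apply Rinv_0_lt_compat; auto].
      rewrite Rinv_inv in Hx.
      apply Rlt_trans with (/ x); auto. apply Rinv_lt_contravar; nra.
    - left; apply Rinv_0_lt_compat; lra. }
  split.
  - split; auto. exists 1; auto.
  - apply Ip_spec; auto.
Qed.

Lemma Ip_at f a : Conv f -> (forall x, continuous f x) ->
  RInt_gen f (at_point a) (Rbar_locally p_infty) = Ip f - RInt f 0 a.
Proof.
  intros Hf Hc. apply (is_RInt_gen_unique (V:=R_CompleteNormedModule)).
  apply bridge_p.
  - intros b _. apply exRc. intros; apply Hc.
  - apply is_lim_ext_loc with (f := fun b => RInt f 0 b - RInt f 0 a).
    + exists 0; intros y Hy.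
      rewrite <- (RInt_Chasles (V:=R_CompleteNormedModule) f 0 a y) by (apply exRc; intros; apply Hc).
      change (plus (RInt f 0 a) (RInt f a y)) with (RInt f 0 a + RInt f a y). ring.
    + apply is_lim_minus'. apply Ip_lim; auto. apply is_lim_const.
Qed.

Lemma scal_m1 (y : R) : scal (-1) y = opp y.
Proof. unfold scal, opp; simpl. unfold mult; simpl. change (-1 * y = - y). ring. Qed.

Lemma RInt_even (f : R -> R) a : (forall x, continuous f x) -> (forall x, f (- x) = f x) ->
  RInt f a 0 = RInt f 0 (- a).
Proof.
  intros Hc He.
  assert (E := RInt_comp_lin (V:=R_CompleteNormedModule) f (-1) 0 0 (- a)).
  rewrite Rmult_0_r, !Rplus_0_r in E.
  replace (-1 * - a) with a in E by ring.
  rewrite <- (opp_RInt_swap (V:=R_CompleteNormedModule)) by (apply exRc; intros; apply Hc).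
  rewrite <- E by (apply exRc; intros; apply Hc).
  rewrite (RInt_ext _ (fun y => opp (f y))).
  - rewrite (RInt_opp (V:=R_CompleteNormedModule)) by (apply exRc; intros; apply Hc).
    change (opp (opp (RInt f 0 (- a))) = RInt f 0 (- a)).
    apply opp_opp.
  - intros x _. rewrite Rplus_0_r. replace (-1 * x) with (- x) by ring. rewrite He.
    apply scal_m1.
Qed.

Lemma Iw_even (f : R -> R) : Conv f -> (forall x, continuous f x) -> (forall x, f (- x) = f x) ->
  RInt_gen f (Rbar_locally m_infty) (Rbar_locally p_infty) = 2 * Ip f.
Proof.
  intros Hf Hc He. apply (is_RInt_gen_unique (V:=R_CompleteNormedModule)).
  replace (2 * Ip f) with (plus (Ip f) (Ip f)) by (change (Ip f + Ip f = 2 * Ip f); ring).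
  apply (is_RInt_gen_Chasles (V:=R_NormedModule)) with 0.
  - apply bridge_m.
    + intros; apply exRc; intros; apply Hc.
    + apply is_lim_ext with (f := fun a => RInt f 0 (- a)).
      * intros y. symmetry; apply RInt_even; auto.
      * apply (is_lim_comp (fun b => RInt f 0 b) (fun b => - b) m_infty (Ip f) p_infty).
        -- apply Ip_lim; auto.
        -- apply is_lim_opp_m.
        -- exists 0; intros; discriminate.
  - apply bridge_p.
    + intros; apply exRc; intros; apply Hc.
    + apply Ip_lim; auto.
Qed.

Lemma eqR (a b : R) : a = b -> a = b.
Proof. auto. Qed.

Ltac nz := repeat first [split | apply Rgt_not_eq]; try lra; try (apply pow_lt; lra).

Lemma der_mult (f g : R -> R) x df dg : is_derive f x df -> is_derive g x dg ->
  is_derive (fun y => f y * g y) x (df * g x + f x * dg).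
Proof.
  intros Hf Hg. apply (is_derive_mult (K:=R_AbsRing)); auto.
  intros; apply Rmult_comm.
Qed.

Lemma der_plus (f g : R -> R) x df dg : is_derive f x df -> is_derive g x dg ->
  is_derive (fun y => f y + g y) x (df + dg).
Proof. intros Hf Hg. apply (is_derive_plus (K:=R_AbsRing) (V:=R_NormedModule)); auto. Qed.

Lemma der_RInt (f : R -> R) a x : (forall y, continuous f y) -> is_derive (fun b => RInt f a b) x (f x).
Proof.
  intros Hc. apply (is_derive_RInt (V:=R_NormedModule) f (fun b => RInt f a b) a x).
  - apply filter_forall. intros b. apply (RInt_correct (V:=R_CompleteNormedModule)). apply exRc; intros; apply Hc.
  - apply Hc.
Qed.

Lemma RInt_const_R (c a b : R) : RInt (fun _ => c) a b = c * (b - a).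
Proof. rewrite (RInt_const (V:=R_CompleteNormedModule)). change ((b - a) * c = c * (b - a)). ring. Qed.

Lemma exp_pow_n (y : R) (n : nat) : exp (INR n * y) = exp y ^ n.
Proof.
  induction n.
  - simpl. rewrite Rmult_0_l. apply exp_0.
  - rewrite S_INR. replace ((INR n + 1) * y) with (INR n * y + y) by ring.
    rewrite exp_plus, IHn. simpl. ring.
Qed.

Lemma poly_le_exp (k : nat) (s : R) : 0 <= s -> (1 + s) ^ k <= INR (S k) ^ (S k) * exp s.
Proof.
  intros Hs.
  assert (HK : 0 < INR (S k)) by (apply lt_0_INR; lia).
  assert (E : exp s = exp (s / INR (S k)) ^ (S k)).
  { rewrite <- exp_pow_n. f_equal. field. lra. }
  assert (H1 : (1 + s) / INR (S k) <= exp (s / INR (S k))).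
  { eapply Rle_trans; [|apply exp_ineq1_le].
    assert (1 <= INR (S k)) by (apply (le_INR 1); lia).
    unfold Rdiv. apply Rmult_le_reg_l with (INR (S k)); auto.
    field_simplify; try lra. }
  assert (H2 : 0 <= (1 + s) / INR (S k)) by (apply Rdiv_le_0_compat; lra).
  assert (H3 : ((1 + s) / INR (S k)) ^ (S k) <= exp s).
  { rewrite E. apply pow_incr. split; auto. }
  assert (H4 : (1 + s) ^ k <= (1 + s) ^ S k).
  { simpl. rewrite <- (Rmult_1_l ((1 + s) ^ k)) at 1. apply Rmult_le_compat_r.
    apply pow_le; lra. lra. }
  assert (H5 : ((1 + s) / INR (S k)) ^ (S k) = (1 + s) ^ (S k) / INR (S k) ^ (S k)).
  { unfold Rdiv. rewrite Rpow_mult_distr, pow_inv. reflexivity. }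
  rewrite H5 in H3.
  assert (H6 : (1 + s) ^ S k <= INR (S k) ^ S k * exp s).
  { apply Rmult_le_reg_r with (/ INR (S k) ^ S k).
    apply Rinv_0_lt_compat, pow_lt; auto.
    replace (INR (S k) ^ S k * exp s * / INR (S k) ^ S k) with (exp s).
    exact H3. field. apply pow_nonzero; lra. }
  lra.
Qed.

Lemma sqrt2pi_pos : 0 < sqrt (2 * PI).
Proof. apply sqrt_lt_R0. generalize PI_RGT_0; lra. Qed.

Lemma phi_pos x : 0 < phi x.
Proof. unfold phi. apply Rmult_lt_0_compat. apply Rinv_0_lt_compat, sqrt2pi_pos. apply exp_pos. Qed.

Lemma phi_even x : phi (- x) = phi x.
Proof. unfold phi. replace ((- x) ^ 2) with (x ^ 2) by ring. reflexivity. Qed.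

Lemma phi_E x : phi x = phi 0 * exp (- x ^ 2 / 2).
Proof. unfold phi. replace (- 0 ^ 2 / 2) with 0 by field. rewrite exp_0. ring. Qed.

Lemma phi0_E : phi 0 = / sqrt (2 * PI).
Proof. unfold phi. replace (- 0 ^ 2 / 2) with 0 by field. rewrite exp_0. ring. Qed.

Lemma exp_le x y : x <= y -> exp x <= exp y.
Proof. intros [H|H]. left; apply exp_increasing; auto. subst; right; reflexivity. Qed.

Lemma phi_le0 x : phi x <= phi 0.
Proof.
  rewrite (phi_E x). rewrite <- (Rmult_1_r (phi 0)) at 2.
  apply Rmult_le_compat_l. left; apply phi_pos.
  rewrite <- exp_0. apply exp_le. assert (0 <= x ^ 2) by (apply pow2_ge_0). lra.
Qed.

Lemma phi_cont x : continuous phi x.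
Proof. apply cont_der. unfold phi. auto_derive. auto. Qed.

Lemma phi_poly (k : nat) : exists C, forall s, (1 + Rabs s) ^ k * phi s <= C.
Proof.
  exists (phi 0 * INR (S k) ^ (S k) * exp (/2)).
  intros s. rewrite phi_E.
  assert (H1 := poly_le_exp k (Rabs s) (Rabs_pos s)).
  assert (H2 : exp (Rabs s) * exp (- s ^ 2 / 2) <= exp (/2)).
  { rewrite <- exp_plus. apply exp_le. rewrite <- pow2_abs.
    assert (0 <= (Rabs s - 1) ^ 2) by apply pow2_ge_0. lra. }
  assert (Hp := phi_pos 0). assert (He := exp_pos (- s ^ 2 / 2)).
  assert (HK : 0 <= INR (S k) ^ S k) by (apply pow_le, pos_INR).
  apply Rle_trans with (INR (S k) ^ S k * exp (Rabs s) * (phi 0 * exp (- s ^ 2 / 2))).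
  - apply Rmult_le_compat_r; [nra | exact H1].
  - replace (INR (S k) ^ S k * exp (Rabs s) * (phi 0 * exp (- s ^ 2 / 2))) with
      (phi 0 * INR (S k) ^ S k * (exp (Rabs s) * exp (- s ^ 2 / 2))) by ring.
    apply Rmult_le_compat_l; [nra | exact H2].
Qed.

Lemma Conv_bound2 f K : Cont0 f -> (forall x, 0 <= x -> Rabs (f x) <= K * / (1 + x) ^ 2) -> Conv f.
Proof.
  intros Hc Hb. apply Conv_dom with (g := fun x => K * / (1 + x) ^ 2); auto.
  apply Conv_scal. apply Conv_d2.
Qed.

Lemma Conv_phi_poly (f : R -> R) (k : nat) : Cont0 f -> (forall s, 0 <= s -> Rabs (f s) <= (1 + s) ^ k * phi s) -> Conv f.
Proof.
  intros Hc Hb. destruct (phi_poly (k + 2)) as [C HC].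
  apply Conv_bound2 with C; auto.
  intros x Hx. eapply Rle_trans; [apply Hb; auto|].
  specialize (HC x). rewrite Rabs_right in HC by lra.
  rewrite pow_add in HC.
  assert (0 < (1 + x) ^ 2) by (apply pow_lt; lra).
  apply Rmult_le_reg_r with ((1 + x) ^ 2); auto.
  replace (C * / (1 + x) ^ 2 * (1 + x) ^ 2) with C by (field; lra). lra.
Qed.

Definition gs (t : R) := exp (- (t * t)).
Definition Gs (x : R) := RInt gs 0 x.
Definition fu (u t : R) := exp (- (u * u * (1 + t * t))) / (1 + t * t).
Definition Dfu (u t : R) := -2 * u * exp (- (u * u * (1 + t * t))).
Definition Us (x : R) := RInt (fun t => fu x t) 0 1.

Lemma gs_cont x : continuous gs x.
Proof. apply cont_der. unfold gs. auto_derive. auto. Qed.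

Lemma fu_der u t : is_derive (fun z => fu z t) u (Dfu u t).
Proof.
  unfold fu, Dfu. auto_derive.
  - assert (0 <= t * t) by nra. lra.
  - assert (0 <= t * t) by nra. field. lra.
Qed.

Lemma cpt_exp x : continuity_pt exp x.
Proof. apply derivable_continuous_pt, derivable_pt_exp. Qed.

Lemma Dfu_cont x t : continuity_2d_pt Dfu x t.
Proof.
  unfold Dfu.
  apply (continuity_2d_pt_mult (fun u v => -2 * u) (fun u v => exp (- (u * u * (1 + v * v))))).
  - apply (continuity_2d_pt_mult (fun u v => -2) (fun u v => u)).
    apply continuity_2d_pt_const. apply continuity_2d_pt_id1.
  - apply (continuity_1d_2d_pt_comp exp (fun u v => - (u * u * (1 + v * v)))).
    + apply cpt_exp.
    + apply continuity_2d_pt_opp.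
      apply (continuity_2d_pt_mult (fun u v => u * u) (fun u v => 1 + v * v)).
      * apply (continuity_2d_pt_mult (fun u v => u) (fun u v => u)); apply continuity_2d_pt_id1.
      * apply (continuity_2d_pt_plus (fun u v => 1) (fun u v => v * v)).
        apply continuity_2d_pt_const.
        apply (continuity_2d_pt_mult (fun u v => v) (fun u v => v)); apply continuity_2d_pt_id2.
Qed.

Lemma fu_cont u t : continuous (fun t => fu u t) t.
Proof. apply cont_der. unfold fu. auto_derive. assert (0 <= t * t) by nra. lra. Qed.

Lemma Us_der x : is_derive Us x (-2 * gs x * Gs x).
Proof.
  unfold Us.
  assert (H := is_derive_RInt_param fu 0 1 x).
  assert (E : RInt (fun t => Derive (fun u => fu u t) x) 0 1 = -2 * gs x * Gs x).
  { rewrite (RInt_ext _ (fun t => -2 * gs x * (x * gs (x * t)))).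
    - rewrite (RInt_scal (V:=R_CompleteNormedModule)).
      + change (-2 * gs x * RInt (fun t => x * gs (x * t)) 0 1 = -2 * gs x * Gs x).
        f_equal. unfold Gs.
        assert (E2 := RInt_comp_lin (V:=R_CompleteNormedModule) gs x 0 0 1).
        rewrite Rmult_0_r, Rmult_1_r, !Rplus_0_r in E2.
        rewrite <- E2 by (apply exRc; intros; apply gs_cont).
        apply RInt_ext. intros t _. rewrite Rplus_0_r. reflexivity.
      + apply exRc. intros. apply cont_mult. apply cont_const.
        apply cont_comp. apply cont_mult. apply cont_const. apply cont_id. apply gs_cont.
    - intros t _. transitivity (Dfu x t). apply is_derive_unique, fu_der. unfold Dfu, gs.
      replace (- (x * x * (1 + t * t))) with (- (x * x) + - (x * t * (x * t))) by ring.
      rewrite exp_plus. apply eqR. ring. }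
  rewrite <- E. apply H.
  - apply filter_forall. intros y t _. eexists. apply fu_der.
  - intros t _. apply (continuity_2d_pt_ext Dfu).
    + intros u v. symmetry. apply is_derive_unique, fu_der.
    + apply Dfu_cont.
  - apply filter_forall. intros y. apply exRc. intros; apply fu_cont.
Qed.

Lemma Gs_der x : is_derive Gs x (gs x).
Proof. unfold Gs. apply der_RInt. apply gs_cont. Qed.

Definition hs x := Gs x * Gs x + Us x.

Lemma hs_der x : is_derive hs x 0.
Proof.
  unfold hs.
  assert (H := der_plus _ _ x _ _ (der_mult _ _ x _ _ (Gs_der x) (Gs_der x)) (Us_der x)).
  replace 0 with (gs x * Gs x + Gs x * gs x + -2 * gs x * Gs x) by ring. exact H.
Qed.

Lemma hs_0 : hs 0 = PI / 4.
Proof.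
  unfold hs, Gs, Us. rewrite RInt_point. change (zero : R) with 0.
  rewrite (RInt_ext _ (fun t => / (1 + t ^ 2))).
  - rewrite (is_RInt_unique (fun t => / (1 + t ^ 2)) 0 1 (atan 1 - atan 0)).
    + rewrite atan_1, atan_0. ring.
    + apply (is_RInt_derive (V:=R_CompleteNormedModule) atan (fun t => / (1 + t ^ 2))).
      * intros x _. apply is_derive_Reals. apply derivable_pt_lim_atan.
      * intros x _. apply cont_der. auto_derive. assert (0 <= x * x) by nra. lra.
  - intros x _. unfold fu. replace (- (0 * 0 * (1 + x * x))) with 0 by ring.
    rewrite exp_0. field_simplify. reflexivity. nra. nra.
Qed.

Lemma hs_const x : 0 <= x -> hs x = PI / 4.
Proof.
  intros Hx. rewrite <- hs_0. destruct Hx as [Hx|<-]; [|reflexivity].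
  symmetry. apply (eq_is_derive (V:=R_NormedModule) hs 0 x); auto.
  intros t _. apply hs_der.
Qed.

Lemma Us_bound x : 0 <= Us x <= gs x.
Proof.
  unfold Us. split.
  - apply RInt_ge_0. lra. apply exRc; intros; apply fu_cont.
    intros t _. unfold fu. apply Rdiv_le_0_compat. left; apply exp_pos. nra.
  - apply Rle_trans with (RInt (fun _ => gs x) 0 1).
    + apply RInt_le. lra. apply exRc; intros; apply fu_cont. apply exRc; intros; apply cont_const.
      intros t Ht. unfold fu, gs.
      assert (H1 : exp (- (x * x * (1 + t * t))) <= exp (- (x * x))).
      { apply exp_le. assert (0 <= x * x * (t * t)) by (apply Rmult_le_pos; nra). nra. }
      assert (H2 : 1 <= 1 + t * t) by nra.
      unfold Rdiv. apply Rle_trans with (exp (- (x * x * (1 + t * t))) * 1).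
      apply Rmult_le_compat_l. left; apply exp_pos.
      rewrite <- Rinv_1. apply Rinv_le_contravar; lra. lra.
    + rewrite RInt_const_R. lra.
Qed.

Lemma gs_le_inv x : 0 < x -> gs x <= / x.
Proof.
  intros Hx. unfold gs. assert (H := exp_ineq1_le (x * x)).
  assert (Hp : 0 < exp (x * x)) by apply exp_pos.
  rewrite exp_Ropp. apply Rinv_le_contravar; auto. nra.
Qed.

Lemma Gs_ge0 x : 0 <= x -> 0 <= Gs x.
Proof.
  intros Hx. unfold Gs. apply RInt_ge_0; auto. apply exRc; intros; apply gs_cont.
  intros; left; apply exp_pos.
Qed.

Lemma PI_gt3 : 3 < PI.
Proof. generalize PI2_3_2; lra. Qed.

Lemma sqrtPI_gt1 : 1 < sqrt PI.
Proof.
  rewrite <- sqrt_1. apply sqrt_lt_1_alt. generalize PI_gt3; lra.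
Qed.

Lemma Gs_lim : is_lim Gs p_infty (sqrt PI / 2).
Proof.
  apply is_lim_p_intro. intros eps He. exists (2 / eps). intros x Hx.
  assert (Hx0 : 0 < x) by (apply Rlt_trans with (2 / eps); auto; apply Rdiv_lt_0_compat; lra).
  assert (Hh := hs_const x (Rlt_le _ _ Hx0)). unfold hs in Hh.
  assert (HU := Us_bound x). assert (Hg := gs_le_inv x Hx0).
  assert (HG := Gs_ge0 x (Rlt_le _ _ Hx0)).
  assert (HS := sqrtPI_gt1).
  assert (Hsq : sqrt PI * sqrt PI = PI) by (apply sqrt_sqrt; generalize PI_RGT_0; lra).
  assert (E : (Gs x - sqrt PI / 2) * (Gs x + sqrt PI / 2) = - Us x).
  { replace ((Gs x - sqrt PI / 2) * (Gs x + sqrt PI / 2)) with (Gs x * Gs x - (sqrt PI * sqrt PI) / 4) by field.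
    rewrite Hsq. lra. }
  assert (Hpos : 0 < Gs x + sqrt PI / 2) by lra.
  assert (E2 : Gs x - sqrt PI / 2 = - Us x / (Gs x + sqrt PI / 2)) by (rewrite <- E; field; lra).
  rewrite E2. unfold Rdiv. rewrite Rabs_mult, Rabs_Ropp, Rabs_right by lra.
  rewrite Rabs_right by (left; apply Rinv_0_lt_compat; lra).
  assert (H1 : / (Gs x + sqrt PI / 2) <= 2) by (rewrite <- (Rinv_inv 2); apply Rinv_le_contravar; lra).
  assert (H2 : / x < eps / 2).
  { replace (eps / 2) with (/ (2 / eps)) by (field; lra). apply Rinv_lt_contravar; auto.
    apply Rmult_lt_0_compat; auto. apply Rdiv_lt_0_compat; lra. }
  apply Rle_lt_trans with (/ x * 2). apply Rmult_le_compat; lra || (left; apply Rinv_0_lt_compat; lra).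
  lra.
Qed.

Lemma gs_bound x : 0 <= x -> Rabs (gs x) <= 2 * / (1 + x) ^ 2.
Proof.
  intros Hx. unfold gs. rewrite Rabs_right by (left; apply exp_pos).
  rewrite exp_Ropp. assert (H := exp_ineq1_le (x * x)).
  assert (0 < (1 + x) ^ 2) by (apply pow_lt; lra).
  apply Rmult_le_reg_r with ((1 + x) ^ 2); auto.
  replace (2 * / (1 + x) ^ 2 * (1 + x) ^ 2) with 2 by (field; lra).
  assert (Hp : 0 < exp (x * x)) by apply exp_pos.
  apply Rmult_le_reg_l with (exp (x * x)); auto.
  replace (exp (x * x) * (/ exp (x * x) * (1 + x) ^ 2)) with ((1 + x) ^ 2) by (field; lra).
  assert (0 <= (x - 1) ^ 2) by apply pow2_ge_0. assert ((1 + x) ^ 2 <= 2 * (1 + x * x)) by nra. lra.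
Qed.

Lemma Conv_gs : Conv gs /\ Ip gs = sqrt PI / 2.
Proof.
  assert (Hc : Cont0 gs) by (intros x _; apply gs_cont).
  split.
  - split; auto. exists (sqrt PI / 2). exact Gs_lim.
  - apply Ip_spec; auto. exact Gs_lim.
Qed.

Lemma phi_gs x : phi x = / sqrt (2 * PI) * gs (/ sqrt 2 * x).
Proof.
  unfold phi, gs. f_equal. f_equal.
  assert (H2 : sqrt 2 * sqrt 2 = 2) by (apply sqrt_sqrt; lra).
  assert (0 < sqrt 2) by (apply sqrt_lt_R0; lra).
  replace (/ sqrt 2 * x * (/ sqrt 2 * x)) with (x * x / (sqrt 2 * sqrt 2)) by (field; lra).
  rewrite H2. field.
Qed.

Lemma Conv_phi : Conv phi /\ Ip phi = / 2.
Proof.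
  destruct Conv_gs as [Hg Ig].
  assert (Hs2 : 0 < / sqrt 2) by (apply Rinv_0_lt_compat, sqrt_lt_R0; lra).
  destruct (Conv_scale gs (/ sqrt 2) Hg Hs2) as [H1 I1].
  destruct (Conv_scal (/ sqrt (2 * PI)) _ H1) as [H2 I2].
  destruct (Conv_ext _ phi H2) as [H3 I3].
  - intros x _; apply phi_cont.
  - intros x _. symmetry; apply phi_gs.
  - split; auto. rewrite I3, I2, I1, Ig.
    rewrite sqrt_mult by (generalize PI_RGT_0; lra).
    assert (0 < sqrt 2) by (apply sqrt_lt_R0; lra).
    assert (0 < sqrt PI) by (apply sqrt_lt_R0; generalize PI_RGT_0; lra).
    field. lra.
Qed.

Lemma Ip_abs_le f g : Conv f -> Conv g -> (forall x, 0 <= x -> Rabs (f x) <= g x) -> Rabs (Ip f) <= Ip g.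
Proof.
  intros Hf Hg H. destruct (Conv_scal (-1) g Hg) as [Hm Im].
  apply Rabs_le. split.
  - assert (Ip (fun x => -1 * g x) <= Ip f).
    { apply Ip_le; auto. intros x Hx. specialize (H x Hx). apply Rabs_le_between in H. lra. }
    lra.
  - apply Ip_le; auto. intros x Hx. specialize (H x Hx). apply Rabs_le_between in H. lra.
Qed.

Lemma Conv_mom (j : nat) : Conv (fun s => s ^ j * phi s).
Proof.
  apply Conv_phi_poly with j.
  - intros x _. apply cont_mult. apply cont_pow, cont_id. apply phi_cont.
  - intros s Hs. rewrite Rabs_mult, (Rabs_right (phi s)) by (left; apply phi_pos).
    apply Rmult_le_compat_r. left; apply phi_pos.
    rewrite Rabs_right by (apply Rle_ge, pow_le; lra). apply pow_incr. lra.
Qed.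

Lemma mom2_RInt b : 0 <= b -> RInt (fun s => s ^ 2 * phi s) 0 b = RInt phi 0 b - b * phi b.
Proof.
  intros Hb.
  assert (Hd : forall s, is_derive (fun s => - s * phi s) s (s ^ 2 * phi s - phi s)).
  { intros s. unfold phi. auto_derive. auto. replace (- s ^ 2 / 2) with (- (s * (s * 1)) * / 2) by field. field. apply Rgt_not_eq, sqrt2pi_pos. }
  assert (E1 : RInt (fun s => s ^ 2 * phi s - phi s) 0 b = - b * phi b).
  { apply is_RInt_unique.
    replace (- b * phi b) with (minus ((fun s => - s * phi s) b) ((fun s => - s * phi s) 0))
      by (unfold minus, plus, opp; simpl; ring).
    apply (is_RInt_derive (V:=R_CompleteNormedModule) (fun s => - s * phi s)).
    - intros; apply Hd.
    - intros x _. apply cont_minus. apply cont_mult. apply cont_pow, cont_id. apply phi_cont. apply phi_cont. }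
  assert (Hex1 : ex_RInt (fun s => s ^ 2 * phi s - phi s) 0 b).
  { apply exRc; intros. apply cont_minus. apply cont_mult. apply cont_pow, cont_id. apply phi_cont. apply phi_cont. }
  assert (Hex2 : ex_RInt phi 0 b) by (apply exRc; intros; apply phi_cont).
  rewrite (RInt_ext _ (fun s => plus (s ^ 2 * phi s - phi s) (phi s))).
  - rewrite (RInt_plus (V:=R_CompleteNormedModule)) by auto.
    change (plus (RInt (fun s => s ^ 2 * phi s - phi s) 0 b) (RInt phi 0 b)) with
      (RInt (fun s => s ^ 2 * phi s - phi s) 0 b + RInt phi 0 b).
    rewrite E1. apply eqR. ring.
  - intros x _. change (x ^ 2 * phi x = x ^ 2 * phi x - phi x + phi x). ring.
Qed.

Lemma mom2 : Ip (fun s => s ^ 2 * phi s) = / 2.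
Proof.
  destruct Conv_phi as [Hp Ip_].
  apply Ip_spec. apply Conv_Cont0, Conv_mom.
  apply is_lim_ext_loc with (f := fun b => RInt phi 0 b - b * phi b).
  - exists 0. intros; symmetry; apply mom2_RInt; lra.
  - replace (/ 2) with (Ip phi - 0) by (rewrite Ip_; ring).
    apply is_lim_minus'. apply Ip_lim; auto.
    destruct (phi_poly 2) as [C HC].
    apply is_lim_p_intro. intros eps He.
    exists (Rmax 0 (C / eps)). intros x Hx.
    assert (Hx0 : 0 < x) by (eapply Rle_lt_trans; [apply Rmax_l|exact Hx]).
    assert (HxC : C / eps < x) by (eapply Rle_lt_trans; [apply Rmax_r|exact Hx]).
    specialize (HC x). rewrite Rabs_right in HC by lra.
    assert (Hp0 := phi_pos x).
    rewrite Rminus_0_r, Rabs_right by nra.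
    assert (H1 : x * phi x * (1 + x) <= C) by (simpl in HC; nra).
    assert (H2 : C < eps * x) by (apply Rmult_lt_reg_r with (/ eps); [apply Rinv_0_lt_compat; lra|];
      replace (eps * x * / eps) with x by (field; lra); exact HxC).
    nra.
Qed.

Lemma cpt_of_der f x l : is_derive f x l -> continuity_pt f x.
Proof.
  intros H. apply derivable_continuous_pt. exists l. apply is_derive_Reals. exact H.
Qed.

Lemma cont_of_der (f : R -> R) x l : is_derive f x l -> continuous f x.
Proof. intros H. apply cont_der. exists l. exact H. Qed.

Lemma der_const (c x : R) : is_derive (fun _ : R => c) x 0.
Proof. auto_derive; auto. Qed.

Lemma Q_E x : Q x = / 2 - RInt phi 0 x.
Proof.
  unfold Q. destruct Conv_phi as [Hp Ip_]. rewrite Ip_at; auto.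
  - rewrite Ip_. reflexivity.
  - apply phi_cont.
Qed.

Lemma Q_der x : is_derive Q x (- phi x).
Proof.
  apply is_derive_ext with (f := fun y => / 2 - RInt phi 0 y).
  - intros; symmetry; apply Q_E.
  - replace (- phi x) with (0 - phi x) by ring.
    apply (is_derive_minus (K:=R_AbsRing) (V:=R_NormedModule)).
    apply der_const. apply der_RInt. apply phi_cont.
Qed.

Lemma Q_cont x : continuous Q x.
Proof. eapply cont_of_der, Q_der. Qed.

Lemma RInt_phi_odd x : RInt phi 0 (- x) = - RInt phi 0 x.
Proof.
  rewrite <- RInt_even. 2: apply phi_cont. 2: apply phi_even.
  rewrite <- (opp_RInt_swap (V:=R_CompleteNormedModule)). reflexivity.
  apply exRc; intros; apply phi_cont.
Qed.

Lemma Q_neg x : Q (- x) = 1 - Q x.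
Proof. rewrite !Q_E, RInt_phi_odd. field. Qed.

Lemma RInt_phi_bounds x : 0 <= x -> 0 <= RInt phi 0 x <= / 2.
Proof.
  intros Hx. destruct Conv_phi as [Hp Ip_]. split.
  - apply RInt_ge_0; auto. apply exRc; intros; apply phi_cont. intros; left; apply phi_pos.
  - rewrite <- Ip_. apply Ip_ge_RInt; auto. intros; left; apply phi_pos.
Qed.

Lemma RInt_phi_abs x : 0 <= x -> RInt phi 0 x <= phi 0 * x.
Proof.
  intros Hx. apply Rle_trans with (RInt (fun _ => phi 0) 0 x).
  - apply RInt_le; auto. apply exRc; intros; apply phi_cont. apply exRc; intros; apply cont_const.
    intros; apply phi_le0.
  - rewrite RInt_const_R. lra.
Qed.

Lemma Q_lim : is_lim Q p_infty 0.
Proof.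
  destruct Conv_phi as [Hp Ip_].
  apply is_lim_ext with (f := fun y => / 2 - RInt phi 0 y). intros; symmetry; apply Q_E.
  replace (Finite 0) with (Finite (/ 2 - Ip phi)) by (rewrite Ip_; f_equal; ring).
  apply is_lim_minus'. apply is_lim_const. apply Ip_lim; auto.
Qed.


Lemma der_minus (f g : R -> R) x df dg : is_derive f x df -> is_derive g x dg ->
  is_derive (fun y => f y - g y) x (df - dg).
Proof. intros Hf Hg. apply (is_derive_minus (K:=R_AbsRing) (V:=R_NormedModule)); auto. Qed.

Definition Hm x := Q x - phi x / (1 + x).

Lemma Hm_der x : 0 <= x -> is_derive Hm x (- x * phi x / (1 + x) ^ 2).
Proof.
  intros Hx. unfold Hm.
  assert (H1 : is_derive (fun y => phi y / (1 + y)) x (- x * phi x / (1 + x) - phi x / (1 + x) ^ 2)).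
  { unfold phi. auto_derive. apply Rgt_not_eq; lra.
    replace (- x ^ 2 / 2) with (- (x * (x * 1)) * / 2) by field. field.
    repeat split; apply Rgt_not_eq; (lra || apply sqrt2pi_pos). }
  assert (H2 := der_minus _ _ x _ _ (Q_der x) H1).
  replace (- x * phi x / (1 + x) ^ 2) with (- phi x - (- x * phi x / (1 + x) - phi x / (1 + x) ^ 2)).
  exact H2. field. lra.
Qed.

Lemma Hm_lim : is_lim Hm p_infty 0.
Proof.
  unfold Hm. replace (Finite 0) with (Finite (0 - 0)) by (f_equal; ring).
  apply is_lim_minus'. apply Q_lim.
  apply is_lim_p_intro. intros eps He. exists (Rmax 0 (phi 0 / eps)). intros x Hx.
  assert (Hx0 : 0 < x) by (eapply Rle_lt_trans; [apply Rmax_l|exact Hx]).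
  assert (HxC : phi 0 / eps < x) by (eapply Rle_lt_trans; [apply Rmax_r|exact Hx]).
  assert (Hp := phi_pos x). assert (Hp0 := phi_le0 x).
  rewrite Rminus_0_r, Rabs_right by (apply Rle_ge, Rdiv_le_0_compat; lra).
  apply Rle_lt_trans with (phi 0 / x).
  - unfold Rdiv. apply Rmult_le_compat; try lra. left; apply Rinv_0_lt_compat; lra.
    apply Rinv_le_contravar; lra.
  - apply Rmult_lt_reg_r with x; auto. unfold Rdiv. rewrite Rmult_assoc, Rinv_l by lra.
    apply Rmult_lt_reg_r with (/ eps). apply Rinv_0_lt_compat; lra.
    replace (eps * x * / eps) with x by (field; lra). lra.
Qed.

Lemma Mills x : 0 <= x -> phi x / (1 + x) <= Q x.
Proof.
  intros Hx.
  assert (Hmono : forall y, x < y -> Hm y <= Hm x).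
  { intros y Hy.
    destruct (MVT_gen Hm x y (fun t => - t * phi t / (1 + t) ^ 2)) as [c [Hc E]].
    - intros t Ht. rewrite Rmin_left, Rmax_right in Ht by lra. apply Hm_der. lra.
    - intros t Ht. rewrite Rmin_left, Rmax_right in Ht by lra. eapply cpt_of_der, Hm_der. lra.
    - rewrite Rmin_left, Rmax_right in Hc by lra.
      assert (0 <= c * phi c / (1 + c) ^ 2).
      { apply Rdiv_le_0_compat. apply Rmult_le_pos. lra. left; apply phi_pos. apply pow_lt; lra. }
      assert (Hd : - c * phi c / (1 + c) ^ 2 * (y - x) <= 0).
      { replace (- c * phi c / (1 + c) ^ 2 * (y - x)) with (- (c * phi c / (1 + c) ^ 2 * (y - x))) by (field; lra).
        assert (0 <= c * phi c / (1 + c) ^ 2 * (y - x)) by (apply Rmult_le_pos; lra). lra. }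
      lra. }
  assert (H := is_lim_le_loc Hm (fun _ => Hm x) p_infty 0 (Hm x)).
  simpl in H. unfold Hm in H. 
  assert (0 <= Hm x).
  { apply (is_lim_le_loc Hm (fun _ => Hm x) p_infty 0 (Hm x)).
    - exists x. intros y Hy. apply Hmono; auto.
    - apply Hm_lim.
    - apply is_lim_const. }
  unfold Hm in H0. lra.
Qed.

Lemma Q_half x : 0 <= x -> 0 < Q x <= / 2.
Proof.
  intros Hx. split.
  - eapply Rlt_le_trans; [|apply Mills; auto]. apply Rdiv_lt_0_compat. apply phi_pos. lra.
  - rewrite Q_E. assert (H := RInt_phi_bounds x Hx). lra.
Qed.

Lemma Q_bounds x : 0 < Q x < 1.
Proof.
  destruct (Rle_or_lt 0 x) as [Hx|Hx].
  - assert (H := Q_half x Hx). lra.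
  - replace x with (- - x) by ring. rewrite Q_neg.
    assert (H := Q_half (- x) ltac:(lra)). lra.
Qed.

Definition D x := Q x * (1 - Q x).

Lemma D_pos x : 0 < D x.
Proof. unfold D. assert (H := Q_bounds x). nra. Qed.

Lemma D_le x : D x <= / 4.
Proof. unfold D. assert (0 <= (Q x - /2) ^ 2) by apply pow2_ge_0. nra. Qed.

Lemma D_even x : D (- x) = D x.
Proof. unfold D. rewrite Q_neg. ring. Qed.

Lemma D_lb x : phi x <= 2 * (1 + Rabs x) * D x.
Proof.
  assert (Hgen : forall y, 0 <= y -> phi y <= 2 * (1 + y) * D y).
  { intros y Hy. unfold D. assert (HM := Mills y Hy). assert (HQ := Q_half y Hy).
    assert (Hp := phi_pos y).
    apply Rle_trans with (2 * (1 + y) * (Q y * / 2)).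
    - replace (2 * (1 + y) * (Q y * / 2)) with ((1 + y) * Q y) by field.
      apply Rmult_le_reg_r with (/ (1 + y)). apply Rinv_0_lt_compat; lra.
      replace ((1 + y) * Q y * / (1 + y)) with (Q y) by (field; lra). exact HM.
    - apply Rmult_le_compat_l. lra. apply Rmult_le_compat_l; lra. }
  destruct (Rle_or_lt 0 x) as [Hx|Hx].
  - rewrite Rabs_right by lra. apply Hgen; auto.
  - rewrite Rabs_left by lra. rewrite <- phi_even, <- D_even. apply Hgen. lra.
Qed.

Lemma xi_E x : xi x = phi x ^ 2 / D x.
Proof. reflexivity. Qed.

Lemma xi_pos x : 0 < xi x.
Proof. unfold xi. apply Rdiv_lt_0_compat. apply pow_lt, phi_pos. apply D_pos. Qed.

Lemma xi_even x : xi (- x) = xi x.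
Proof. rewrite !xi_E, phi_even, D_even. reflexivity. Qed.

Lemma xi_le x : xi x <= 2 * (1 + Rabs x) * phi x.
Proof.
  rewrite xi_E. assert (HD := D_pos x). assert (Hl := D_lb x). assert (Hp := phi_pos x).
  apply Rmult_le_reg_r with (D x); auto. unfold Rdiv. rewrite Rmult_assoc, Rinv_l by lra.
  simpl. nra.
Qed.

Lemma xi_0 : xi 0 = 2 / PI.
Proof.
  rewrite xi_E. unfold D. rewrite Q_E, RInt_point. change (zero : R) with 0.
  rewrite phi0_E. rewrite <- Rinv_pow by (apply Rgt_not_eq, sqrt2pi_pos).
  rewrite pow2_sqrt by (generalize PI_RGT_0; lra). field. generalize PI_RGT_0; lra.
Qed.

Definition dxi x := xi x * (- 2 * x + phi x * (1 - 2 * Q x) / D x).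

Lemma xi_der x : is_derive xi x (dxi x).
Proof.
  assert (HD := D_pos x).
  assert (H1 : is_derive (fun y => phi y ^ 2) x (- 2 * x * phi x ^ 2)).
  { unfold phi. auto_derive. auto. replace (- x ^ 2 / 2) with (- (x * (x * 1)) * / 2) by field.
    field. apply Rgt_not_eq, sqrt2pi_pos. }
  assert (H2 : is_derive D x (- phi x * (1 - 2 * Q x))).
  { unfold D. assert (H := der_mult _ _ x _ _ (Q_der x) (der_minus _ _ x _ _ (der_const 1 x) (Q_der x))).
    replace (- phi x * (1 - 2 * Q x)) with (- phi x * (1 - Q x) + Q x * (0 - - phi x)) by ring. exact H. }
  assert (H3 := is_derive_inv D x _ H2 ltac:(lra)).
  assert (H4 := der_mult _ _ x _ _ H1 H3).
  unfold dxi. rewrite xi_E.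
  replace (phi x ^ 2 / D x * (-2 * x + phi x * (1 - 2 * Q x) / D x)) with
    (-2 * x * phi x ^ 2 * / D x + phi x ^ 2 * (- (- phi x * (1 - 2 * Q x)) / D x ^ 2)) by (field; lra).
  exact H4.
Qed.

Lemma xi_cont x : continuous xi x.
Proof. eapply cont_of_der, xi_der. Qed.

Lemma phi0_le_half : phi 0 <= / 2.
Proof.
  rewrite phi0_E. apply Rinv_le_contravar. lra.
  assert (H4 : sqrt 4 = 2) by (replace 4 with (2 * 2) by ring; apply sqrt_square; lra).
  assert (sqrt 4 <= sqrt (2 * PI)) by (apply sqrt_le_1_alt; generalize PI_gt3; lra). lra.
Qed.

Lemma one_m2Q_abs x : Rabs (1 - 2 * Q x) <= 2 * phi 0 * Rabs x.
Proof.
  assert (Hgen : forall y, 0 <= y -> Rabs (1 - 2 * Q y) <= 2 * phi 0 * y).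
  { intros y Hy. rewrite Q_E. replace (1 - 2 * (/ 2 - RInt phi 0 y)) with (2 * RInt phi 0 y) by field.
    assert (H1 := RInt_phi_bounds y Hy). assert (H2 := RInt_phi_abs y Hy).
    rewrite Rabs_right by lra. lra. }
  destruct (Rle_or_lt 0 x) as [Hx|Hx].
  - rewrite (Rabs_right x) by lra. apply Hgen; auto.
  - rewrite (Rabs_left x) by lra. replace x with (- - x) at 1 by ring. rewrite Q_neg.
    replace (1 - 2 * (1 - Q (- x))) with (- (1 - 2 * Q (- x))) by ring.
    rewrite Rabs_Ropp. apply Hgen. lra.
Qed.

Lemma dxi_bound x : Rabs (dxi x) <= 8 * Rabs x * ((1 + Rabs x) ^ 2 * phi x).
Proof.
  unfold dxi.
  assert (Hxi := xi_pos x). assert (Hxl := xi_le x). assert (HD := D_pos x).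
  assert (Hl := D_lb x). assert (Hp := phi_pos x). assert (H2 := one_m2Q_abs x).
  assert (Hp0 := phi0_le_half). assert (Hp0p := phi_pos 0). assert (Ha := Rabs_pos x).
  rewrite Rabs_mult, (Rabs_right (xi x)) by lra.
  assert (H3 : Rabs (phi x * (1 - 2 * Q x) / D x) <= 2 * (1 + Rabs x) * (2 * phi 0 * Rabs x)).
  { unfold Rdiv. rewrite !Rabs_mult. rewrite (Rabs_right (phi x)) by lra.
    rewrite (Rabs_right (/ D x)) by (left; apply Rinv_0_lt_compat; lra).
    replace (phi x * Rabs (1 - 2 * Q x) * / D x) with ((phi x * / D x) * Rabs (1 - 2 * Q x)) by ring.
    apply Rmult_le_compat. apply Rmult_le_pos; [lra| left; apply Rinv_0_lt_compat; lra].
    apply Rabs_pos.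
    - apply Rmult_le_reg_r with (D x); auto. rewrite Rmult_assoc, Rinv_l, Rmult_1_r by lra. exact Hl.
    - exact H2. }
  assert (H4 : Rabs (-2 * x + phi x * (1 - 2 * Q x) / D x) <= 4 * Rabs x * (1 + Rabs x)).
  { eapply Rle_trans. apply Rabs_triang. rewrite Rabs_mult.
    replace (Rabs (-2)) with 2 by (rewrite Rabs_left by lra; ring).
    assert (2 * (1 + Rabs x) * (2 * phi 0 * Rabs x) <= 2 * (1 + Rabs x) * Rabs x) by nra.
    nra. }
  apply Rle_trans with (2 * (1 + Rabs x) * phi x * (4 * Rabs x * (1 + Rabs x))).
  - apply Rmult_le_compat; auto; try lra. apply Rabs_pos.
  - simpl. nra.
Qed.

Lemma xi_taylor : exists K, 0 <= K /\ forall u, Rabs (xi u - xi 0) <= K * u ^ 2.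
Proof.
  destruct (phi_poly 2) as [C HC].
  assert (HC0 : 0 <= C) by (eapply Rle_trans; [|apply (HC 0)]; apply Rmult_le_pos; [apply pow_le; assert (H:=Rabs_pos 0); lra | left; apply phi_pos]).
  exists (8 * C). split. lra.
  intros u.
  destruct (MVT_gen xi 0 u dxi) as [c [Hc E]].
  - intros; apply xi_der.
  - intros; eapply cpt_of_der, xi_der.
  - rewrite E, Rminus_0_r, Rabs_mult.
    assert (Hcu : Rabs c <= Rabs u).
    { destruct (Rle_or_lt 0 u) as [Hu|Hu].
      + rewrite Rmin_left, Rmax_right in Hc by lra. rewrite !Rabs_right by lra. lra.
      + rewrite Rmin_right, Rmax_left in Hc by lra. rewrite !Rabs_left1 by lra. lra. }
    assert (Hd := dxi_bound c). specialize (HC c).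
    assert (Hpc := phi_pos c).
    rewrite <- pow2_abs.
    assert (Hac := Rabs_pos c). assert (Hau := Rabs_pos u).
    apply Rle_trans with (8 * Rabs c * C * Rabs u).
    + apply Rmult_le_compat_r. auto. eapply Rle_trans. exact Hd.
      apply Rmult_le_compat_l. lra. exact HC.
    + assert (HH : Rabs c * (C * Rabs u) <= Rabs u * (C * Rabs u)) by (apply Rmult_le_compat_r; [apply Rmult_le_pos|]; lra).
      simpl. lra.
Qed.

Lemma xi_lip : exists L, 0 <= L /\ forall a b, Rabs (xi a - xi b) <= L * Rabs (a - b).
Proof.
  destruct (phi_poly 3) as [C HC].
  assert (HC0 : 0 <= C) by (eapply Rle_trans; [|apply (HC 0)]; apply Rmult_le_pos; [apply pow_le; assert (H:=Rabs_pos 0); lra | left; apply phi_pos]).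
  exists (8 * C). split. lra.
  intros a b.
  destruct (MVT_gen xi b a dxi) as [c [Hc E]].
  - intros; apply xi_der.
  - intros; eapply cpt_of_der, xi_der.
  - rewrite E, Rabs_mult.
    apply Rmult_le_compat_r. apply Rabs_pos.
    eapply Rle_trans. apply dxi_bound. specialize (HC c).
    assert (Hpc := phi_pos c). assert (Hac := Rabs_pos c).
    simpl in HC |- *. nra.
Qed.

Lemma Conv_polyK f K j : Cont0 f -> (forall s, 0 <= s -> Rabs (f s) <= K * ((1 + s) ^ j * phi s)) -> Conv f.
Proof.
  intros Hc Hb.
  assert (Hg : Conv (fun s => (1 + s) ^ j * phi s)).
  { apply Conv_phi_poly with j.
    - intros x _. apply cont_mult. apply cont_pow, cont_plus; [apply cont_const|apply cont_id]. apply phi_cont.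
    - intros s Hs. rewrite Rabs_right. lra. apply Rle_ge, Rmult_le_pos. apply pow_le; lra. left; apply phi_pos. }
  apply Conv_dom with (g := fun s => K * ((1 + s) ^ j * phi s)); auto.
  apply Conv_scal; auto.
Qed.

Lemma Conv_lin a b f g : Conv f -> Conv g ->
  Conv (fun x => a * f x + b * g x) /\ Ip (fun x => a * f x + b * g x) = a * Ip f + b * Ip g.
Proof.
  intros Hf Hg.
  destruct (Conv_scal a f Hf) as [H1 I1]. destruct (Conv_scal b g Hg) as [H2 I2].
  destruct (Conv_plus _ _ H1 H2) as [H3 I3]. split; auto. rewrite I3, I1, I2. reflexivity.
Qed.

Lemma Bx_ex : exists Bx, 0 < Bx /\ forall u, xi u <= Bx.
Proof.
  destruct (phi_poly 1) as [C HC]. exists (2 * C + 1). 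
  assert (H0 := HC 0). assert (0 <= C).
  { eapply Rle_trans; [|exact H0]. apply Rmult_le_pos. apply pow_le. assert (H := Rabs_pos 0). lra. left; apply phi_pos. }
  split. lra. intros u. eapply Rle_trans. apply xi_le. specialize (HC u). simpl in HC. lra.
Qed.

Lemma xi_rs_cont r s : continuous (fun s => xi (r * s)) s.
Proof. apply cont_comp. apply cont_mult. apply cont_const. apply cont_id. apply xi_cont. Qed.

Definition zf (k : nat) (r : R) := fun s => s ^ k * xi (r * s) * phi s.

Lemma zf_cont k r s : continuous (zf k r) s.
Proof.
  unfold zf. apply cont_mult. apply cont_mult. apply cont_pow, cont_id. apply xi_rs_cont. apply phi_cont.
Qed.

Lemma Conv_zf k r : Conv (zf k r).
Proof.
  destruct Bx_ex as [Bx [HB HBx]].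
  apply Conv_polyK with Bx k.
  - intros x _; apply zf_cont.
  - intros s Hs. unfold zf. assert (Hp := phi_pos s). assert (Hx := xi_pos (r * s)).
    assert (Hx2 := HBx (r * s)).
    rewrite Rabs_right.
    + assert (H1 : s ^ k <= (1 + s) ^ k) by (apply pow_incr; lra).
      assert (H2 : 0 <= s ^ k) by (apply pow_le; lra).
      apply Rle_trans with (s ^ k * Bx * phi s).
      * apply Rmult_le_compat_r. lra. apply Rmult_le_compat_l; lra.
      * assert (H3 : s ^ k * Bx <= (1 + s) ^ k * Bx) by (apply Rmult_le_compat_r; lra).
        nra.
    + apply Rle_ge. apply Rmult_le_pos. apply Rmult_le_pos. apply pow_le; lra. lra. lra.
Qed.

Lemma zf_even k r s : (k = 0 \/ k = 2)%nat -> zf k r (- s) = zf k r s.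
Proof.
  intros Hk. unfold zf. rewrite phi_even. replace (r * - s) with (- (r * s)) by ring.
  rewrite xi_even. destruct Hk as [->| ->]; simpl; ring.
Qed.

Lemma zeta_E k r : (k = 0 \/ k = 2)%nat -> zeta k r = 2 * Ip (zf k r).
Proof.
  intros Hk. unfold zeta. apply Iw_even.
  - apply Conv_zf.
  - apply zf_cont.
  - intros; apply zf_even; auto.
Qed.

Lemma zeta_ge0 k r : (k = 0 \/ k = 2)%nat -> 0 <= zeta k r.
Proof.
  intros Hk. rewrite zeta_E by auto. assert (0 <= Ip (zf k r)); [|lra].
  apply Ip_ge0. apply Conv_zf. intros x Hx. unfold zf.
  apply Rmult_le_pos. apply Rmult_le_pos. apply pow_le; lra. left; apply xi_pos. left; apply phi_pos.
Qed.

Definition Mo (j : nat) := Ip (fun s => s ^ j * phi s).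

Lemma Mo0 : Mo 0 = / 2.
Proof.
  unfold Mo. destruct Conv_phi as [H I]. rewrite <- I.
  destruct (Conv_ext phi (fun s => s ^ 0 * phi s) H) as [_ E].
  - intros x Hx. apply (Conv_Cont0 _ (Conv_mom 0)). lra.
  - intros; simpl; ring.
  - exact E.
Qed.

Lemma Mo2 : Mo 2 = / 2.
Proof. apply mom2. Qed.

Lemma Mo_ge0 j : 0 <= Mo j.
Proof.
  apply Ip_ge0. apply Conv_mom. intros x Hx. apply Rmult_le_pos. apply pow_le; lra. left; apply phi_pos.
Qed.

Lemma Ip_diff_bound f g h c : Conv f -> Conv g -> Conv h ->
  (forall s, 0 <= s -> Rabs (f s - g s) <= c * h s) -> Rabs (Ip f - Ip g) <= c * Ip h.
Proof.
  intros Hf Hg Hh Hb.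
  destruct (Conv_lin 1 (-1) f g Hf Hg) as [H1 I1].
  destruct (Conv_scal c h Hh) as [H2 I2].
  replace (Ip f - Ip g) with (1 * Ip f + -1 * Ip g) by ring. rewrite <- I1, <- I2.
  apply Ip_abs_le; auto. intros s Hs. replace (1 * f s + -1 * g s) with (f s - g s) by ring. auto.
Qed.

Lemma zeta_near0 : exists Cz, 0 <= Cz /\ forall k r, (k = 0 \/ k = 2)%nat -> Rabs (zeta k r - 2 / PI) <= Cz * r ^ 2.
Proof.
  destruct xi_taylor as [K [HK HT]].
  exists (2 * K * (Mo 2 + Mo 4)). split.
  { assert (H2 := Mo_ge0 2). assert (H4 := Mo_ge0 4). apply Rmult_le_pos; lra. }
  intros k r Hk.
  rewrite zeta_E by auto.
  assert (E : 2 / PI = 2 * (xi 0 * Mo k)).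
  { rewrite xi_0. destruct Hk as [->| ->]; [rewrite Mo0|rewrite Mo2]; field; generalize PI_RGT_0; lra. }
  rewrite E.
  destruct (Conv_scal (xi 0) _ (Conv_mom k)) as [Hm Im]. unfold Mo. rewrite <- Im.
  replace (2 * Ip (zf k r) - 2 * Ip (fun x => xi 0 * (x ^ k * phi x))) with
    (2 * (Ip (zf k r) - Ip (fun x => xi 0 * (x ^ k * phi x)))) by ring.
  rewrite Rabs_mult, (Rabs_right 2) by lra.
  assert (H : Rabs (Ip (zf k r) - Ip (fun x => xi 0 * (x ^ k * phi x))) <= (K * r ^ 2) * Ip (fun s => s ^ (k + 2) * phi s)).
  { apply Ip_diff_bound; auto. apply Conv_zf. apply Conv_mom.
    intros s Hs. unfold zf.
    replace (s ^ k * xi (r * s) * phi s - xi 0 * (s ^ k * phi s)) with ((s ^ k * phi s) * (xi (r * s) - xi 0)) by ring.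
    rewrite Rabs_mult, Rabs_right by (apply Rle_ge, Rmult_le_pos; [apply pow_le; lra| left; apply phi_pos]).
    assert (HT' := HT (r * s)).
    rewrite pow_add.
    assert (0 <= s ^ k * phi s) by (apply Rmult_le_pos; [apply pow_le; lra| left; apply phi_pos]).
    replace (K * r ^ 2 * (s ^ k * s ^ 2 * phi s)) with ((s ^ k * phi s) * (K * (r * s) ^ 2)) by ring.
    apply Rmult_le_compat_l; auto. }
  fold (Mo (k + 2)) in H.
  assert (Hb : Mo (k + 2) <= Mo 2 + Mo 4).
  { assert (H2 := Mo_ge0 2). assert (H4 := Mo_ge0 4). destruct Hk as [->| ->]; simpl; lra. }
  assert (0 <= K * r ^ 2) by (apply Rmult_le_pos; auto; apply pow2_ge_0).
  assert (K * r ^ 2 * Mo (k + 2) <= K * r ^ 2 * (Mo 2 + Mo 4)) by (apply Rmult_le_compat_l; auto).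
  apply Rle_trans with (2 * (K * r ^ 2 * (Mo 2 + Mo 4))). lra. unfold Mo. right; ring.
Qed.

Lemma zeta_lip : exists Lz, 0 <= Lz /\ forall k r r', (k = 0 \/ k = 2)%nat -> Rabs (zeta k r - zeta k r') <= Lz * Rabs (r - r').
Proof.
  destruct xi_lip as [L [HL HLi]].
  exists (2 * L * (Mo 1 + Mo 3)). split.
  { assert (H1 := Mo_ge0 1). assert (H3 := Mo_ge0 3). apply Rmult_le_pos; lra. }
  intros k r r' Hk. rewrite !zeta_E by auto.
  replace (2 * Ip (zf k r) - 2 * Ip (zf k r')) with (2 * (Ip (zf k r) - Ip (zf k r'))) by ring.
  rewrite Rabs_mult, (Rabs_right 2) by lra.
  assert (H : Rabs (Ip (zf k r) - Ip (zf k r')) <= (L * Rabs (r - r')) * Ip (fun s => s ^ (k + 1) * phi s)).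
  { apply Ip_diff_bound; auto. apply Conv_zf. apply Conv_zf. apply Conv_mom.
    intros s Hs. unfold zf.
    replace (s ^ k * xi (r * s) * phi s - s ^ k * xi (r' * s) * phi s) with ((s ^ k * phi s) * (xi (r * s) - xi (r' * s))) by ring.
    rewrite Rabs_mult, Rabs_right by (apply Rle_ge, Rmult_le_pos; [apply pow_le; lra| left; apply phi_pos]).
    assert (HT' := HLi (r * s) (r' * s)).
    replace (r * s - r' * s) with ((r - r') * s) in HT' by ring.
    rewrite Rabs_mult, (Rabs_right s) in HT' by lra.
    rewrite pow_add, pow_1.
    assert (0 <= s ^ k * phi s) by (apply Rmult_le_pos; [apply pow_le; lra| left; apply phi_pos]).
    replace (L * Rabs (r - r') * (s ^ k * s * phi s)) with ((s ^ k * phi s) * (L * (Rabs (r - r') * s))) by ring.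
    apply Rmult_le_compat_l; auto. }
  fold (Mo (k + 1)) in H.
  assert (Hb : Mo (k + 1) <= Mo 1 + Mo 3).
  { assert (H2 := Mo_ge0 1). assert (H4 := Mo_ge0 3). destruct Hk as [->| ->]; simpl; lra. }
  assert (0 <= L * Rabs (r - r')) by (apply Rmult_le_pos; auto; apply Rabs_pos).
  assert (L * Rabs (r - r') * Mo (k + 1) <= L * Rabs (r - r') * (Mo 1 + Mo 3)) by (apply Rmult_le_compat_l; auto).
  nra.
Qed.

Lemma lip_cont (f : R -> R) Lz x : 0 <= Lz -> (forall r r', Rabs (f r - f r') <= Lz * Rabs (r - r')) -> continuous f x.
Proof.
  intros HL H. apply continuity_pt_filterlim. intros eps Heps.
  exists (eps / (Lz + 1)). split. apply Rdiv_lt_0_compat; lra.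
  intros y [_ Hy]. simpl in Hy. unfold R_dist in *.
  eapply Rle_lt_trans. apply H.
  apply Rle_lt_trans with (Lz * (eps / (Lz + 1))).
  apply Rmult_le_compat_l; lra.
  apply Rmult_lt_reg_r with (Lz + 1). lra. unfold Rdiv.
  replace (Lz * (eps * / (Lz + 1)) * (Lz + 1)) with (Lz * eps) by (field; lra). nra.
Qed.

Lemma zeta_cont k r : (k = 0 \/ k = 2)%nat -> continuous (zeta k) r.
Proof.
  intros Hk. destruct zeta_lip as [Lz [HL HLi]]. apply lip_cont with Lz; auto.
Qed.

Lemma zeta_ub : exists Bz, 0 < Bz /\ forall k r, (k = 0 \/ k = 2)%nat -> zeta k r <= Bz.
Proof.
  destruct Bx_ex as [Bx [HB HBx]]. exists Bx. split; auto.
  intros k r Hk. rewrite zeta_E by auto.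
  assert (Hm : Ip (zf k r) <= Ip (fun s => Bx * (s ^ k * phi s))).
  { destruct (Conv_scal Bx _ (Conv_mom k)) as [H1 _].
    apply Ip_le; auto. apply Conv_zf. intros x Hx. unfold zf.
    assert (0 <= x ^ k * phi x) by (apply Rmult_le_pos; [apply pow_le; lra| left; apply phi_pos]).
    specialize (HBx (r * x)). nra. }
  destruct (Conv_scal Bx _ (Conv_mom k)) as [_ I1]. rewrite I1 in Hm. fold (Mo k) in Hm.
  destruct Hk as [-> | ->]; [rewrite Mo0 in Hm | rewrite Mo2 in Hm]; lra.
Qed.

Definition Ix := Ip xi.
Definition Ix2 := Ip (fun u => xi u * u ^ 2).
Definition Ix4 := Ip (fun u => xi u * u ^ 4).

Lemma Conv_xij j : Conv (fun u => xi u * u ^ j).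
Proof.
  apply Conv_polyK with 2 (S j).
  - intros x _. apply cont_mult. apply xi_cont. apply cont_pow, cont_id.
  - intros s Hs. rewrite Rabs_mult, (Rabs_right (xi s)) by (left; apply xi_pos).
    rewrite Rabs_right by (apply Rle_ge, pow_le; lra).
    assert (H := xi_le s). rewrite Rabs_right in H by lra.
    assert (H1 : s ^ j <= (1 + s) ^ j) by (apply pow_incr; lra).
    assert (H2 : 0 <= s ^ j) by (apply pow_le; lra).
    assert (Hp := phi_pos s). assert (Hx := xi_pos s).
    apply Rle_trans with (2 * (1 + s) * phi s * (1 + s) ^ j).
    + apply Rmult_le_compat; lra.
    + simpl. right; ring.
Qed.

Lemma Conv_xi : Conv xi.
Proof.
  destruct (Conv_ext _ xi (Conv_xij 0)) as [H _]; auto.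
  intros x _; apply xi_cont. intros; simpl; ring.
Qed.

Lemma A0_E : A0 = 2 * phi 0 * Ix.
Proof.
  unfold A0, Ix. rewrite Iw_even. rewrite phi0_E. ring.
  apply Conv_xi. apply xi_cont. apply xi_even.
Qed.

Lemma A2_E : A2 = 2 * phi 0 * Ix2.
Proof.
  unfold A2, Ix2. rewrite Iw_even. rewrite phi0_E. ring.
  apply Conv_xij. intros; apply cont_mult. apply xi_cont. apply cont_pow, cont_id.
  intros; rewrite xi_even; simpl; ring.
Qed.

Lemma Ix_pos : 0 < Ix.
Proof.
  unfold Ix. apply Rlt_le_trans with (RInt xi 0 1).
  - apply RInt_gt_0. lra. intros; apply xi_pos. intros; apply xi_cont.
  - apply Ip_ge_RInt. apply Conv_xi. intros; left; apply xi_pos. lra.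
Qed.

Lemma Ix2_pos : 0 < Ix2.
Proof.
  unfold Ix2. apply Rlt_le_trans with (RInt (fun u => xi u * u ^ 2) 0 1).
  - apply RInt_gt_0. lra. intros x Hx. apply Rmult_lt_0_compat. apply xi_pos. apply pow_lt; lra.
    intros; apply cont_mult. apply xi_cont. apply cont_pow, cont_id.
  - apply Ip_ge_RInt. apply Conv_xij. intros x Hx. apply Rmult_le_pos. left; apply xi_pos. apply pow_le; lra. lra.
Qed.

Lemma Ix4_ge0 : 0 <= Ix4.
Proof.
  unfold Ix4. apply Ip_ge0. apply Conv_xij. intros x Hx. apply Rmult_le_pos. left; apply xi_pos. apply pow_le; lra.
Qed.

Lemma phi_gap s : 0 <= phi 0 - phi s <= phi 0 * s ^ 2 / 2.
Proof.
  split. assert (H := phi_le0 s). lra.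
  rewrite (phi_E s). assert (H := exp_ineq1_le (- s ^ 2 / 2)). assert (Hp := phi_pos 0).
  assert (phi 0 * (1 + - s ^ 2 / 2) <= phi 0 * exp (- s ^ 2 / 2)) by (apply Rmult_le_compat_l; lra).
  lra.
Qed.

Lemma zeta0_large r : 0 < r -> 0 <= A0 - r * zeta 0 r <= phi 0 * Ix2 / r ^ 2.
Proof.
  intros Hr.
  destruct (Conv_scale xi r Conv_xi Hr) as [Hs Is].
  destruct (Conv_lin (phi 0) (-1) _ _ Hs (Conv_zf 0 r)) as [Hg Ig].
  destruct (Conv_scale _ r (Conv_xij 2) Hr) as [Hs2 Is2].
  destruct (Conv_scal (phi 0 / (2 * r ^ 2)) _ Hs2) as [Hs3 Is3].
  assert (E : A0 - r * zeta 0 r = 2 * r * Ip (fun x => phi 0 * xi (r * x) + -1 * zf 0 r x)).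
  { rewrite Ig, Is, A0_E, zeta_E by auto. unfold Ix. field. lra. }
  assert (Hpt : forall s, 0 <= s -> 0 <= phi 0 * xi (r * s) + -1 * zf 0 r s <= phi 0 / (2 * r ^ 2) * (xi (r * s) * (r * s) ^ 2)).
  { intros s Hs0. unfold zf. rewrite pow_O.
    replace (phi 0 * xi (r * s) + -1 * (1 * xi (r * s) * phi s)) with (xi (r * s) * (phi 0 - phi s)) by ring.
    assert (Hx := xi_pos (r * s)). assert (Hg' := phi_gap s).
    split. nra.
    replace (phi 0 / (2 * r ^ 2) * (xi (r * s) * (r * s) ^ 2)) with (xi (r * s) * (phi 0 * s ^ 2 / 2)) by (field; lra).
    apply Rmult_le_compat_l; lra. }
  assert (H1 : 0 <= Ip (fun x => phi 0 * xi (r * x) + -1 * zf 0 r x)).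
  { apply Ip_ge0; auto. intros; apply Hpt; auto. }
  assert (H2 : Ip (fun x => phi 0 * xi (r * x) + -1 * zf 0 r x) <= phi 0 / (2 * r ^ 2) * (Ix2 / r)).
  { unfold Ix2. rewrite <- Is2. rewrite <- Is3. apply Ip_le; auto. intros; apply Hpt; auto. }
  rewrite E. split. nra.
  apply Rle_trans with (2 * r * (phi 0 / (2 * r ^ 2) * (Ix2 / r))).
  apply Rmult_le_compat_l; lra. right; field; lra.
Qed.

Lemma zeta2_large r : 0 < r -> 0 <= A2 - r ^ 3 * zeta 2 r <= phi 0 * Ix4 / r ^ 2.
Proof.
  intros Hr.
  destruct (Conv_scale _ r (Conv_xij 2) Hr) as [Hs Is].
  destruct (Conv_lin (phi 0) (- r ^ 2) _ _ Hs (Conv_zf 2 r)) as [Hg Ig].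
  destruct (Conv_scale _ r (Conv_xij 4) Hr) as [Hs2 Is2].
  destruct (Conv_scal (phi 0 / (2 * r ^ 2)) _ Hs2) as [Hs3 Is3].
  assert (E : A2 - r ^ 3 * zeta 2 r = 2 * r * Ip (fun x => phi 0 * (xi (r * x) * (r * x) ^ 2) + - r ^ 2 * zf 2 r x)).
  { rewrite Ig, Is, A2_E, zeta_E by auto. unfold Ix2. field. lra. }
  assert (Hpt : forall s, 0 <= s -> 0 <= phi 0 * (xi (r * s) * (r * s) ^ 2) + - r ^ 2 * zf 2 r s <= phi 0 / (2 * r ^ 2) * (xi (r * s) * (r * s) ^ 4)).
  { intros s Hs0. unfold zf.
    replace (phi 0 * (xi (r * s) * (r * s) ^ 2) + - r ^ 2 * (s ^ 2 * xi (r * s) * phi s)) with ((xi (r * s) * (r * s) ^ 2) * (phi 0 - phi s)) by ring.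
    assert (Hx := xi_pos (r * s)). assert (Hg' := phi_gap s).
    assert (Hq : 0 <= xi (r * s) * (r * s) ^ 2) by (apply Rmult_le_pos; [lra | apply pow2_ge_0]).
    split. nra.
    replace (phi 0 / (2 * r ^ 2) * (xi (r * s) * (r * s) ^ 4)) with ((xi (r * s) * (r * s) ^ 2) * (phi 0 * s ^ 2 / 2)) by (field; lra).
    apply Rmult_le_compat_l; lra. }
  assert (H1 : 0 <= Ip (fun x => phi 0 * (xi (r * x) * (r * x) ^ 2) + - r ^ 2 * zf 2 r x)).
  { apply Ip_ge0; auto. intros; apply Hpt; auto. }
  assert (H2 : Ip (fun x => phi 0 * (xi (r * x) * (r * x) ^ 2) + - r ^ 2 * zf 2 r x) <= phi 0 / (2 * r ^ 2) * (Ix4 / r)).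
  { unfold Ix4. rewrite <- Is2. rewrite <- Is3. apply Ip_le; auto. intros; apply Hpt; auto. }
  rewrite E. split. nra.
  apply Rle_trans with (2 * r * (phi 0 / (2 * r ^ 2) * (Ix4 / r))).
  apply Rmult_le_compat_l; lra. right; field; lra.
Qed.

Lemma zeta_pos k r : (k = 0 \/ k = 2)%nat -> 0 < zeta k r.
Proof.
  intros Hk. rewrite zeta_E by auto. assert (0 < Ip (zf k r)); [|lra].
  apply Rlt_le_trans with (RInt (zf k r) 0 1).
  - apply RInt_gt_0. lra.
    + intros x Hx. unfold zf. apply Rmult_lt_0_compat. apply Rmult_lt_0_compat.
      apply pow_lt; lra. apply xi_pos. apply phi_pos.
    + intros; apply zf_cont.
  - apply Ip_ge_RInt. apply Conv_zf. 2: lra.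
    intros x Hx. unfold zf. apply Rmult_le_pos. apply Rmult_le_pos. apply pow_le; lra.
    left; apply xi_pos. left; apply phi_pos.
Qed.

Lemma A0_pos : 0 < A0.
Proof. rewrite A0_E. assert (H := Ix_pos). assert (H2 := phi_pos 0). nra. Qed.
Lemma A2_pos : 0 < A2.
Proof. rewrite A2_E. assert (H := Ix2_pos). assert (H2 := phi_pos 0). nra. Qed.

Definition Bm := phi 0 * Ix2 / A0 + phi 0 * Ix4 / A2.

Lemma Bm_ge0 : 0 <= Bm.
Proof.
  unfold Bm. assert (H1 := Ix2_pos). assert (H2 := Ix4_ge0). assert (H3 := A0_pos). assert (H4 := A2_pos).
  assert (H5 := phi_pos 0).
  apply Rplus_le_le_0_compat; apply Rdiv_le_0_compat; try lra; nra.
Qed.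

Lemma z0_up r : 0 < r -> zeta 0 r <= A0 / r.
Proof.
  intros Hr. destruct (zeta0_large r Hr) as [H _].
  apply Rmult_le_reg_l with r; auto. replace (r * (A0 / r)) with A0 by (field; lra). lra.
Qed.

Lemma z2_up r : 0 < r -> zeta 2 r <= A2 / r ^ 3.
Proof.
  intros Hr. destruct (zeta2_large r Hr) as [H _].
  assert (0 < r ^ 3) by (apply pow_lt; auto).
  apply Rmult_le_reg_l with (r ^ 3); auto. replace (r ^ 3 * (A2 / r ^ 3)) with A2 by (field; lra). lra.
Qed.

Lemma z0_low r y : 0 < r -> Bm / r ^ 2 <= y -> A0 * (1 - y) / r <= zeta 0 r.
Proof.
  intros Hr Hy. destruct (zeta0_large r Hr) as [_ H].
  assert (H2 := A0_pos). assert (H3 := A2_pos). assert (H4 := Ix4_ge0). assert (H5 := phi_pos 0).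
  assert (Hr2 : 0 < r ^ 2) by (apply pow_lt; auto).
  assert (Hb : phi 0 * Ix2 / r ^ 2 <= A0 * y).
  { apply Rle_trans with (A0 * (Bm / r ^ 2)); [|apply Rmult_le_compat_l; lra].
    unfold Bm. apply Rmult_le_reg_r with (r ^ 2 / A0). apply Rdiv_lt_0_compat; lra.
    replace (phi 0 * Ix2 / r ^ 2 * (r ^ 2 / A0)) with (phi 0 * Ix2 / A0) by (field; lra).
    replace (A0 * ((phi 0 * Ix2 / A0 + phi 0 * Ix4 / A2) / r ^ 2) * (r ^ 2 / A0)) with
      (phi 0 * Ix2 / A0 + phi 0 * Ix4 / A2) by (field; lra).
    assert (0 <= phi 0 * Ix4 / A2) by (apply Rdiv_le_0_compat; nra). lra. }
  apply Rmult_le_reg_l with r; auto. replace (r * (A0 * (1 - y) / r)) with (A0 - A0 * y) by (field; lra). lra.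
Qed.

Lemma z2_low r y : 0 < r -> Bm / r ^ 2 <= y -> A2 * (1 - y) / r ^ 3 <= zeta 2 r.
Proof.
  intros Hr Hy. destruct (zeta2_large r Hr) as [_ H].
  assert (H2 := A0_pos). assert (H3 := A2_pos). assert (H4 := Ix2_pos). assert (H5 := phi_pos 0).
  assert (H6 := Ix4_ge0).
  assert (Hr2 : 0 < r ^ 2) by (apply pow_lt; auto). assert (Hr3 : 0 < r ^ 3) by (apply pow_lt; auto).
  assert (Hb : phi 0 * Ix4 / r ^ 2 <= A2 * y).
  { apply Rle_trans with (A2 * (Bm / r ^ 2)); [|apply Rmult_le_compat_l; lra].
    unfold Bm. apply Rmult_le_reg_r with (r ^ 2 / A2). apply Rdiv_lt_0_compat; lra.
    replace (phi 0 * Ix4 / r ^ 2 * (r ^ 2 / A2)) with (phi 0 * Ix4 / A2) by (field; lra).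
    replace (A2 * ((phi 0 * Ix2 / A0 + phi 0 * Ix4 / A2) / r ^ 2) * (r ^ 2 / A2)) with
      (phi 0 * Ix2 / A0 + phi 0 * Ix4 / A2) by (field; lra).
    assert (0 <= phi 0 * Ix2 / A0) by (apply Rdiv_le_0_compat; nra). lra. }
  apply Rmult_le_reg_l with (r ^ 3); auto. replace (r ^ 3 * (A2 * (1 - y) / r ^ 3)) with (A2 - A2 * y) by (field; lra). lra.
Qed.

Definition Fi (n : nat) (r : R) := sqrt (zeta 0 r) ^ (n - 1) * sqrt (zeta 2 r) * INR n * r ^ (n - 1).

Lemma alpha_E snr n : alpha snr n = RInt (Fi n) 0 (sqrt snr).
Proof. reflexivity. Qed.

Lemma Fi_cont n r : continuous (Fi n) r.
Proof.
  unfold Fi. apply cont_mult. apply cont_mult. apply cont_mult.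
  - apply cont_pow. apply continuous_sqrt_comp. apply zeta_cont; auto.
  - apply continuous_sqrt_comp. apply zeta_cont; auto.
  - apply cont_const.
  - apply cont_pow, cont_id.
Qed.

Lemma Fi_exRInt n a b : ex_RInt (Fi n) a b.
Proof. apply exRc; intros; apply Fi_cont. Qed.

Lemma Fi_ge0 n r : 0 <= r -> 0 <= Fi n r.
Proof.
  intros Hr. unfold Fi. apply Rmult_le_pos. apply Rmult_le_pos. apply Rmult_le_pos.
  apply pow_le, sqrt_pos. apply sqrt_pos. apply pos_INR. apply pow_le; auto.
Qed.

Lemma RInt_pow_n (K : R) (n : nat) (a : R) : (1 <= n)%nat -> RInt (fun r => K * INR n * r ^ (n - 1)) 0 a = K * a ^ n.
Proof.
  intros Hn. apply is_RInt_unique.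
  replace (K * a ^ n) with (minus ((fun r => K * r ^ n) a) ((fun r => K * r ^ n) 0)).
  - apply (is_RInt_derive (V:=R_CompleteNormedModule) (fun r => K * r ^ n)).
    + intros x _. auto_derive; auto. replace (pred n) with (n - 1)%nat by lia. ring.
    + intros x _. apply cont_mult. apply cont_mult; apply cont_const. apply cont_pow, cont_id.
  - unfold minus, plus, opp; simpl. rewrite pow_i by lia. change (K * a ^ n + - (K * 0) = K * a ^ n). ring.
Qed.

Lemma bernoulli (x : R) (n : nat) : 0 <= x <= 1 -> 1 - INR n * x <= (1 - x) ^ n.
Proof.
  intros Hx. induction n.
  - simpl. lra.
  - rewrite S_INR. simpl.
    assert (H0 : 0 <= (1 - x) ^ n) by (apply pow_le; lra).
    assert (Hn := pos_INR n).
    assert ((1 - x) * (1 - INR n * x) <= (1 - x) * (1 - x) ^ n) by (apply Rmult_le_compat_l; lra).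
    assert (0 <= INR n * x * x) by (apply Rmult_le_pos; [apply Rmult_le_pos|]; lra).
    nra.
Qed.

Lemma pow_le_1 (y : R) (n : nat) : 0 <= y <= 1 -> y ^ n <= 1.
Proof.
  intros Hy. induction n. simpl; lra. simpl.
  assert (0 <= y ^ n) by (apply pow_le; lra). nra.
Qed.

Lemma sqrt_ge_self y : 0 <= y <= 1 -> y <= sqrt y.
Proof.
  intros Hy. assert (H1 : sqrt y <= 1) by (rewrite <- sqrt_1; apply sqrt_le_1_alt; lra).
  assert (H2 := sqrt_pos y). assert (H3 : sqrt y * sqrt y = y) by (apply sqrt_sqrt; lra). nra.
Qed.

Lemma sqrt_le_self y : 1 <= y -> sqrt y <= y.
Proof.
  intros Hy. assert (H1 : 1 <= sqrt y) by (rewrite <- sqrt_1; apply sqrt_le_1_alt; lra).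
  assert (H3 : sqrt y * sqrt y = y) by (apply sqrt_sqrt; lra). nra.
Qed.

Lemma part1 : forall eps : R, 0 < eps -> exists delta : R, 0 < delta /\
     forall (n : nat) (snr : R), (1 <= n)%nat -> 0 < snr -> INR n * snr < delta ->
       Rabs (alpha snr n / (sqrt (2 / PI * snr)) ^ n - 1) < eps.
Proof.
  intros eps He.
  destruct zeta_near0 as [Cz [HCz Hz]].
  set (c := 2 / PI).
  assert (Hc : 0 < c) by (unfold c; apply Rdiv_lt_0_compat; [lra|apply PI_RGT_0]).
  set (eta := Rmin (eps / 4) (/ 2)).
  assert (Heta : 0 < eta /\ eta <= eps / 4 /\ eta <= / 2).
  { unfold eta. split. apply Rmin_glb_lt; lra. split. apply Rmin_l. apply Rmin_r. }
  exists (eta * c / (Cz + 1)). split. apply Rdiv_lt_0_compat; [apply Rmult_lt_0_compat|]; lra.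
  intros n snr Hn Hs Hd.
  set (x := Cz * snr / c).
  assert (HnR : 1 <= INR n) by (apply (le_INR 1); auto).
  assert (Hx0 : 0 <= x) by (unfold x; apply Rdiv_le_0_compat; [apply Rmult_le_pos|]; lra).
  assert (Hnx : INR n * x <= eta).
  { unfold x. replace (INR n * (Cz * snr / c)) with (Cz * (INR n * snr) / c) by (field; lra).
    apply Rle_trans with (Cz * (eta * c / (Cz + 1)) / c).
    - unfold Rdiv. apply Rmult_le_compat_r. left; apply Rinv_0_lt_compat; lra.
      apply Rmult_le_compat_l; lra.
    - replace (Cz * (eta * c / (Cz + 1)) / c) with (eta * (Cz / (Cz + 1))) by (field; lra).
      assert (Cz / (Cz + 1) <= 1).
      { apply Rmult_le_reg_r with (Cz + 1). lra. unfold Rdiv. rewrite Rmult_assoc, Rinv_l; lra. }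
      nra. }
  assert (Hx1 : x <= INR n * x) by nra.
  assert (Hzb : forall k r, (k = 0 \/ k = 2)%nat -> 0 <= r <= sqrt snr -> c * (1 - x) <= zeta k r <= c * (1 + x)).
  { intros k r Hk Hr. specialize (Hz k r Hk). fold c in Hz.
    assert (Hr2 : r ^ 2 <= snr).
    { rewrite <- (pow2_sqrt snr) by lra. apply pow_incr. lra. }
    assert (Cz * r ^ 2 <= c * x) by (unfold x; replace (c * (Cz * snr / c)) with (Cz * snr) by (field; lra); apply Rmult_le_compat_l; lra).
    apply Rabs_le_between in Hz. lra. }
  set (s1 := sqrt (c * (1 - x))). set (s2 := sqrt (c * (1 + x))).
  destruct n as [|m]; [lia|].
  replace (S m - 1)%nat with m in * by lia.
  assert (HF : forall r, 0 <= r <= sqrt snr -> s1 ^ S m * INR (S m) * r ^ m <= Fi (S m) r <= s2 ^ S m * INR (S m) * r ^ m).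
  { intros r Hr. unfold Fi. replace (S m - 1)%nat with m by lia.
    assert (H0 := Hzb 0%nat r ltac:(auto) Hr). assert (H2 := Hzb 2%nat r ltac:(auto) Hr).
    assert (Hrm : 0 <= INR (S m) * r ^ m) by (apply Rmult_le_pos; [apply pos_INR|apply pow_le; lra]).
    assert (Hs1a : s1 <= sqrt (zeta 0 r)) by (apply sqrt_le_1_alt; lra).
    assert (Hs1b : s1 <= sqrt (zeta 2 r)) by (apply sqrt_le_1_alt; lra).
    assert (Hs2a : sqrt (zeta 0 r) <= s2) by (apply sqrt_le_1_alt; lra).
    assert (Hs2b : sqrt (zeta 2 r) <= s2) by (apply sqrt_le_1_alt; lra).
    assert (Hp1 : 0 <= s1) by apply sqrt_pos.
    assert (Hpa : 0 <= sqrt (zeta 0 r)) by apply sqrt_pos.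
    assert (Hpb : 0 <= sqrt (zeta 2 r)) by apply sqrt_pos.
    assert (E1 : s1 ^ S m = s1 ^ m * s1) by (simpl; ring).
    assert (E2 : s2 ^ S m = s2 ^ m * s2) by (simpl; ring).
    assert (Pa : s1 ^ m <= sqrt (zeta 0 r) ^ m) by (apply pow_incr; lra).
    assert (Pb : sqrt (zeta 0 r) ^ m <= s2 ^ m) by (apply pow_incr; lra).
    assert (Q1 : 0 <= s1 ^ m) by (apply pow_le; lra).
    split.
    - rewrite E1. apply Rmult_le_compat_r. apply pow_le; lra. apply Rmult_le_compat_r. apply pos_INR.
      apply Rmult_le_compat; auto.
    - rewrite E2. apply Rmult_le_compat_r. apply pow_le; lra. apply Rmult_le_compat_r. apply pos_INR.
      apply Rmult_le_compat; auto. apply pow_le; auto. }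
  assert (Hsq := sqrt_pos snr).
  assert (Hlow : s1 ^ S m * sqrt snr ^ S m <= alpha snr (S m)).
  { rewrite alpha_E. rewrite <- RInt_pow_n by lia. replace (S m - 1)%nat with m by lia.
    apply RInt_le; auto. apply exRc; intros. apply cont_mult. apply cont_const. apply cont_pow, cont_id.
    apply Fi_exRInt. intros r Hr. apply HF. lra. }
  assert (Hup : alpha snr (S m) <= s2 ^ S m * sqrt snr ^ S m).
  { rewrite alpha_E. rewrite <- RInt_pow_n by lia. replace (S m - 1)%nat with m by lia.
    apply RInt_le; auto. apply Fi_exRInt. apply exRc; intros. apply cont_mult. apply cont_const. apply cont_pow, cont_id.
    intros r Hr. apply HF. lra. }
  set (T := sqrt (2 / PI * snr) ^ S m).
  assert (ET : T = (sqrt c * sqrt snr) ^ S m) by (unfold T; fold c; rewrite sqrt_mult; lra).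
  assert (HT : 0 < T) by (unfold T; apply pow_lt, sqrt_lt_R0; fold c; nra).
  assert (E1 : s1 ^ S m * sqrt snr ^ S m = T * sqrt (1 - x) ^ S m).
  { rewrite ET. unfold s1. rewrite sqrt_mult by lra. rewrite <- !Rpow_mult_distr. f_equal. ring. }
  assert (E2 : s2 ^ S m * sqrt snr ^ S m = T * sqrt (1 + x) ^ S m).
  { rewrite ET. unfold s2. rewrite sqrt_mult by lra. rewrite <- !Rpow_mult_distr. f_equal. ring. }
  rewrite E1 in Hlow. rewrite E2 in Hup.
  assert (L1 : 1 - INR (S m) * x <= sqrt (1 - x) ^ S m).
  { eapply Rle_trans. apply bernoulli. lra. apply pow_incr. split. lra. apply sqrt_ge_self. lra. }
  assert (L2 : sqrt (1 + x) ^ S m * (1 - INR (S m) * x) <= 1).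
  { apply Rle_trans with ((1 + x) ^ S m * (1 - x) ^ S m).
    - apply Rmult_le_compat. apply pow_le, sqrt_pos. lra. apply pow_incr. split. apply sqrt_pos. apply sqrt_le_self. lra.
      apply bernoulli. lra.
    - rewrite <- Rpow_mult_distr. apply pow_le_1. nra. }
  assert (Hr1 : 1 - INR (S m) * x <= alpha snr (S m) / T).
  { apply Rmult_le_reg_r with T; auto. unfold Rdiv. rewrite Rmult_assoc, Rinv_l by lra. nra. }
  assert (Hr2 : alpha snr (S m) / T * (1 - INR (S m) * x) <= 1).
  { assert (0 <= 1 - INR (S m) * x) by lra.
    apply Rle_trans with (sqrt (1 + x) ^ S m * (1 - INR (S m) * x)); auto.
    apply Rmult_le_compat_r; auto. apply Rmult_le_reg_r with T; auto.
    unfold Rdiv. rewrite Rmult_assoc, Rinv_l by lra. lra. }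
  replace (sqrt (c * snr) ^ S m) with T by reflexivity. destruct Heta as [He1 [He2 He3]]. apply Rabs_lt_between. split.
  - lra.
  - assert (Hq : 0 <= alpha snr (S m) / T) by lra.
    assert (alpha snr (S m) / T <= 1 + 2 * (INR (S m) * x)).
    { set (q := alpha snr (S m) / T) in *. set (y := INR (S m) * x) in *. nra. }
    lra.
Qed.

Lemma sqrt_pow2_split r k : 0 < r -> r ^ (S k) = sqrt r ^ (S k) * sqrt r ^ (S k).
Proof.
  intros Hr. rewrite <- Rpow_mult_distr. rewrite sqrt_sqrt by lra. reflexivity.
Qed.

Lemma Fi_upper k r : 0 < r ->
  Fi (S (S k)) r <= sqrt A0 ^ S k * sqrt A2 * INR (S (S k)) * (sqrt r ^ k / r).
Proof.
  intros Hr. unfold Fi. replace (S (S k) - 1)%nat with (S k) by lia.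
  assert (Hsr : 0 < sqrt r) by (apply sqrt_lt_R0; auto).
  assert (H0 : sqrt (zeta 0 r) <= sqrt A0 / sqrt r).
  { rewrite <- sqrt_div by (auto; left; apply A0_pos). apply sqrt_le_1_alt. apply z0_up; auto. }
  assert (H2 : sqrt (zeta 2 r) <= sqrt A2 / (r * sqrt r)).
  { assert (E : r * sqrt r = sqrt (r ^ 3)).
    { replace (r ^ 3) with ((r * r) * r) by ring. rewrite sqrt_mult by nra. rewrite sqrt_square by lra. reflexivity. }
    rewrite E. rewrite <- sqrt_div by (try (left; apply A2_pos); apply pow_lt; auto).
    apply sqrt_le_1_alt. apply z2_up; auto. }
  assert (P0 : sqrt (zeta 0 r) ^ S k <= (sqrt A0 / sqrt r) ^ S k) by (apply pow_incr; split; [apply sqrt_pos|auto]).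
  assert (Hn := pos_INR (S (S k))).
  assert (Hrk : 0 <= r ^ S k) by (apply pow_le; lra).
  apply Rle_trans with ((sqrt A0 / sqrt r) ^ S k * (sqrt A2 / (r * sqrt r)) * INR (S (S k)) * r ^ S k).
  - apply Rmult_le_compat_r; auto. apply Rmult_le_compat_r; auto. apply Rmult_le_compat; auto.
    apply pow_le, sqrt_pos. apply sqrt_pos.
  - right. rewrite (sqrt_pow2_split r k Hr). unfold Rdiv. rewrite Rpow_mult_distr, pow_inv.
    simpl. field. nz.
Qed.

Lemma Fi_lower k r y : 0 < r -> Bm / r ^ 2 <= y -> y <= 1 ->
  (1 - INR (S (S k)) * y) * (sqrt A0 ^ S k * sqrt A2 * INR (S (S k)) * (sqrt r ^ k / r)) <= Fi (S (S k)) r.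
Proof.
  intros Hr Hy Hy1.
  assert (Hy0 : 0 <= y) by (eapply Rle_trans; [|exact Hy]; apply Rdiv_le_0_compat; [apply Bm_ge0|apply pow_lt; auto]).
  unfold Fi. replace (S (S k) - 1)%nat with (S k) by lia.
  assert (Hsr : 0 < sqrt r) by (apply sqrt_lt_R0; auto).
  assert (HA0 := A0_pos). assert (HA2 := A2_pos).
  set (sy := sqrt (1 - y)).
  assert (Hsy : 0 <= sy) by apply sqrt_pos.
  assert (H0 : sqrt A0 / sqrt r * sy <= sqrt (zeta 0 r)).
  { unfold sy. rewrite <- sqrt_div by (auto; lra). rewrite <- sqrt_mult by (try apply Rdiv_le_0_compat; lra).
    apply sqrt_le_1_alt. replace (A0 / r * (1 - y)) with (A0 * (1 - y) / r) by (field; lra). apply z0_low; auto. }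
  assert (H2 : sqrt A2 / (r * sqrt r) * sy <= sqrt (zeta 2 r)).
  { assert (E : r * sqrt r = sqrt (r ^ 3)).
    { replace (r ^ 3) with ((r * r) * r) by ring. rewrite sqrt_mult by nra. rewrite sqrt_square by lra. reflexivity. }
    rewrite E. unfold sy. rewrite <- sqrt_div by (try lra; apply pow_lt; auto).
    rewrite <- sqrt_mult by (try apply Rdiv_le_0_compat; try lra; apply pow_lt; auto).
    apply sqrt_le_1_alt. replace (A2 / r ^ 3 * (1 - y)) with (A2 * (1 - y) / r ^ 3) by (field; lra). apply z2_low; auto. }
  assert (Hq0 : 0 <= sqrt A0 / sqrt r * sy) by (apply Rmult_le_pos; [apply Rdiv_le_0_compat; [apply sqrt_pos|lra]|auto]).
  assert (Hq2 : 0 <= sqrt A2 / (r * sqrt r) * sy) by (apply Rmult_le_pos; [apply Rdiv_le_0_compat; [apply sqrt_pos|nra]|auto]).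
  assert (P0 : (sqrt A0 / sqrt r * sy) ^ S k <= sqrt (zeta 0 r) ^ S k) by (apply pow_incr; auto).
  assert (Hn := pos_INR (S (S k))).
  assert (Hrk : 0 <= r ^ S k) by (apply pow_le; lra).
  assert (Hb : 1 - INR (S (S k)) * y <= sy ^ S (S k)).
  { eapply Rle_trans. apply bernoulli. lra. apply pow_incr. split. lra. apply sqrt_ge_self. lra. }
  apply Rle_trans with ((sqrt A0 / sqrt r * sy) ^ S k * (sqrt A2 / (r * sqrt r) * sy) * INR (S (S k)) * r ^ S k).
  - assert (E : (sqrt A0 / sqrt r * sy) ^ S k * (sqrt A2 / (r * sqrt r) * sy) * INR (S (S k)) * r ^ S k
              = sy ^ S (S k) * (sqrt A0 ^ S k * sqrt A2 * INR (S (S k)) * (sqrt r ^ k / r))).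
    { rewrite (sqrt_pow2_split r k Hr). unfold Rdiv. rewrite !Rpow_mult_distr, pow_inv.
      simpl. field. nz. }
    rewrite E. apply Rmult_le_compat_r; auto.
    apply Rmult_le_pos. apply Rmult_le_pos. apply Rmult_le_pos. apply pow_le, sqrt_pos. apply sqrt_pos. auto.
    apply Rdiv_le_0_compat. apply pow_le; lra. auto.
  - apply Rmult_le_compat_r; auto. apply Rmult_le_compat_r; auto. apply Rmult_le_compat; auto. apply pow_le; auto.
Qed.

Lemma Uk_cont k r : 0 < r -> continuous (fun r => sqrt r ^ k / r) r.
Proof.
  intros Hr. apply cont_mult. apply cont_pow. apply continuous_sqrt. apply cont_inv. apply cont_id. lra.
Qed.

Lemma RInt_Uk k a b : (1 <= k)%nat -> 0 < a -> a <= b ->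
  RInt (fun r => sqrt r ^ k / r) a b = 2 / INR k * (sqrt b ^ k - sqrt a ^ k).
Proof.
  intros Hk Ha Hab. apply is_RInt_unique.
  assert (HK : 0 < INR k) by (apply lt_0_INR; lia).
  replace (2 / INR k * (sqrt b ^ k - sqrt a ^ k)) with
    (minus ((fun r => 2 / INR k * sqrt r ^ k) b) ((fun r => 2 / INR k * sqrt r ^ k) a))
    by (unfold minus, plus, opp; simpl; change (2 / INR k * sqrt b ^ k + - (2 / INR k * sqrt a ^ k) = 2 / INR k * (sqrt b ^ k - sqrt a ^ k)); ring).
  apply (is_RInt_derive (V:=R_CompleteNormedModule) (fun r => 2 / INR k * sqrt r ^ k)).
  - intros x Hx. rewrite Rmin_left, Rmax_right in Hx by lra.
    assert (Hs : 0 < sqrt x) by (apply sqrt_lt_R0; lra).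
    auto_derive. lra.
    destruct k as [|k']; [lia|]. simpl pred.
    assert (E : x = sqrt x * sqrt x) by (rewrite sqrt_sqrt; lra).
    set (s := sqrt x) in *. clearbody s. rewrite E. change (s ^ S k') with (s * s ^ k'). field. nz.
  - intros x Hx. rewrite Rmin_left, Rmax_right in Hx by lra. apply Uk_cont. lra.
Qed.

Lemma RInt_U0 a b : 0 < a -> a <= b -> RInt (fun r => sqrt r ^ 0 / r) a b = ln b - ln a.
Proof.
  intros Ha Hab. apply is_RInt_unique.
  replace (ln b - ln a) with (minus (ln b) (ln a)) by reflexivity.
  apply (is_RInt_derive (V:=R_CompleteNormedModule) ln).
  - intros x Hx. rewrite Rmin_left, Rmax_right in Hx by lra.
    auto_derive. lra. simpl. field. lra.
  - intros x Hx. rewrite Rmin_left, Rmax_right in Hx by lra. apply Uk_cont. lra.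
Qed.

Lemma RInt_scal_R (c : R) f a b : ex_RInt f a b -> RInt (fun x => c * f x) a b = c * RInt f a b.
Proof. intros H. rewrite (RInt_scal (V:=R_CompleteNormedModule)) by auto. reflexivity. Qed.


Lemma Fi_small Bz n r : (1 <= n)%nat -> 0 <= r -> (forall k r, (k = 0 \/ k = 2)%nat -> zeta k r <= Bz) ->
  Fi n r <= sqrt Bz ^ n * INR n * r ^ (n - 1).
Proof.
  intros Hn Hr HB. unfold Fi.
  assert (H0 : sqrt (zeta 0 r) <= sqrt Bz) by (apply sqrt_le_1_alt; apply HB; auto).
  assert (H2 : sqrt (zeta 2 r) <= sqrt Bz) by (apply sqrt_le_1_alt; apply HB; auto).
  destruct n as [|m]; [lia|]. replace (S m - 1)%nat with m by lia.
  replace (sqrt Bz ^ S m) with (sqrt Bz ^ m * sqrt Bz) by (simpl; ring).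
  apply Rmult_le_compat_r. apply pow_le; auto. apply Rmult_le_compat_r. apply pos_INR.
  apply Rmult_le_compat; auto. apply pow_le, sqrt_pos. apply sqrt_pos. apply pow_incr. split; auto. apply sqrt_pos.
Qed.

Lemma Rpower_quarter snr k : 0 < snr -> Rpower snr (INR k / 4) = sqrt (sqrt snr) ^ k.
Proof.
  intros Hs.
  assert (Hs1 : 0 < sqrt snr) by (apply sqrt_lt_R0; auto).
  replace (INR k / 4) with ((/ 2 * / 2) * INR k) by field.
  rewrite <- Rpower_mult, <- Rpower_mult.
  rewrite (Rpower_sqrt snr) by auto. rewrite (Rpower_sqrt (sqrt snr)) by auto.
  apply Rpower_pow. apply sqrt_lt_R0. auto.
Qed.

Lemma RInt_Fi_split n a b : RInt (Fi n) 0 b = RInt (Fi n) 0 a + RInt (Fi n) a b.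
Proof.
  rewrite <- (RInt_Chasles (V:=R_CompleteNormedModule) (Fi n) 0 a b) by apply Fi_exRInt. reflexivity.
Qed.

Lemma RInt_Uc c k a b : (1 <= k)%nat -> 0 < a -> a <= b ->
  RInt (fun r => c * (sqrt r ^ k / r)) a b = c * (2 / INR k * (sqrt b ^ k - sqrt a ^ k)).
Proof.
  intros Hk Ha Hab. rewrite RInt_scal_R. rewrite RInt_Uk; auto.
  apply exRc. intros z Hz. rewrite Rmin_left, Rmax_right in Hz by lra. apply Uk_cont. lra.
Qed.

Lemma div_le_helper P u c : 0 < u -> P <= c * u -> P / u <= c.
Proof.
  intros Hu H. apply Rmult_le_reg_r with u; auto. unfold Rdiv. rewrite Rmult_assoc, Rinv_l by lra. lra.
Qed.

Lemma le_div_helper P u c : 0 < u -> c * u <= P -> c <= P / u.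
Proof.
  intros Hu H. apply Rmult_le_reg_r with u; auto. unfold Rdiv. rewrite Rmult_assoc, Rinv_l by lra. lra.
Qed.

Lemma part_n3 : forall eps : R, 0 < eps -> exists M : R, forall (n : nat) (snr : R),
       (3 <= n)%nat -> 0 < snr -> M < snr / INR n ->
       Rabs (alpha snr n /
             (2 * INR n / (INR n - 2) * sqrt A0 ^ (n - 1) * sqrt A2
              * Rpower snr ((INR n - 2) / 4)) - 1) < eps.
Proof.
  intros eps He.
  set (e := Rmin eps 1).
  assert (He1 : 0 < e /\ e <= eps /\ e <= 1) by (unfold e; split; [apply Rmin_glb_lt; lra| split; [apply Rmin_l|apply Rmin_r]]).
  destruct He1 as [He0 [Hee He1]].
  set (ts := e / 4). set (th := ts ^ 2).
  assert (Hts : 0 < ts <= / 4) by (unfold ts; split; lra).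
  assert (Hth : 0 < th) by (unfold th; apply pow_lt; lra).
  destruct zeta_ub as [Bz [HBz HzB]].
  assert (HA0 := A0_pos). assert (HA2 := A2_pos).
  set (a0 := sqrt A0). set (a2 := sqrt A2).
  assert (Ha0 : 0 < a0) by (apply sqrt_lt_R0; auto).
  assert (Ha2 : 0 < a2) by (apply sqrt_lt_R0; auto).
  set (W := a0 / (2 * a2 * e) + 1).
  assert (HW : 1 < W) by (unfold W; assert (0 < a0 / (2 * a2 * e)) by (apply Rdiv_lt_0_compat; nra); lra).
  assert (HBm := Bm_ge0).
  exists (Rmax (W ^ 4) (4 * Bm / (e * th ^ 2))).
  intros n snr Hn Hs HM.
  assert (HM1 : W ^ 4 < snr / INR n) by (eapply Rle_lt_trans; [apply Rmax_l|exact HM]).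
  assert (HM2 : 4 * Bm / (e * th ^ 2) < snr / INR n) by (eapply Rle_lt_trans; [apply Rmax_r|exact HM]).
  assert (HnR : 3 <= INR n) by (replace 3 with (INR 3) by (simpl; ring); apply le_INR; auto).
  assert (Hsn : snr / INR n <= snr).
  { apply Rmult_le_reg_r with (INR n). lra. unfold Rdiv. rewrite Rmult_assoc, Rinv_l by lra. nra. }
  assert (HW4 : 1 < W ^ 4) by (apply Rlt_pow_R1; auto; lia).
  assert (HsW : W ^ 4 < snr) by lra.
  assert (Hsq1 : 1 < sqrt snr).
  { rewrite <- sqrt_1. apply sqrt_lt_1_alt. lra. }
  set (Qs := sqrt (sqrt snr)).
  assert (HQW : W < Qs).
  { unfold Qs. assert (E1 : sqrt (W ^ 4) = W ^ 2) by (replace (W ^ 4) with ((W ^ 2) ^ 2) by ring; apply sqrt_pow2; apply pow_le; lra).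
    assert (E2 : sqrt (W ^ 2) = W) by (apply sqrt_pow2; lra).
    rewrite <- E2. apply sqrt_lt_1_alt. split. apply pow_le; lra. rewrite <- E1. apply sqrt_lt_1_alt. split. apply pow_le; lra. lra. }
  assert (HQ1 : 1 < Qs) by lra.
  destruct n as [|[|[|k]]]; try (exfalso; lia).
  set (n := S (S (S k))) in *.
  assert (En1 : (n - 1)%nat = S (S k)) by (unfold n; lia).
  assert (En2 : INR n - 2 = INR (S k)) by (unfold n; rewrite !S_INR; ring).
  rewrite En1, En2. rewrite Rpower_quarter by auto. fold a0 a2 Qs.
  assert (HK : 0 < INR (S k)) by (apply lt_0_INR; lia).
  assert (HKn : INR (S k) <= INR n) by (apply le_INR; unfold n; lia).
  set (C := a0 ^ S (S k) * a2 * INR n).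
  assert (HC : 0 < C) by (unfold C; apply Rmult_lt_0_compat; [apply Rmult_lt_0_compat; [apply pow_lt; auto|auto]|lra]).
  set (T := 2 * INR n / INR (S k) * a0 ^ S (S k) * a2 * Qs ^ S k).
  assert (ET : T = C * (2 / INR (S k)) * Qs ^ S k) by (unfold T, C; field; lra).
  assert (HQk : Qs <= Qs ^ S k) by (rewrite <- pow_1 at 1; apply Rle_pow; lra || lia).
  assert (HT : 0 < T) by (rewrite ET; apply Rmult_lt_0_compat; [apply Rmult_lt_0_compat; [auto| apply Rdiv_lt_0_compat; lra]|apply pow_lt; lra]).
  assert (Hsqs : sqrt (sqrt snr) = Qs) by reflexivity.
  set (t := Rmin 1 (sqrt (A0 / Bz))).
  assert (Ht : 0 < t <= 1).
  { unfold t. split. apply Rmin_glb_lt. lra. apply sqrt_lt_R0, Rdiv_lt_0_compat; auto. apply Rmin_l. }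
  assert (HtB : sqrt Bz * t <= a0).
  { apply Rle_trans with (sqrt Bz * sqrt (A0 / Bz)).
    apply Rmult_le_compat_l. apply sqrt_pos. apply Rmin_r.
    rewrite <- sqrt_mult by (try apply Rdiv_le_0_compat; lra). unfold a0. right. f_equal. field. lra. }
  assert (U1 : RInt (Fi n) 0 t <= a0 ^ n).
  { apply Rle_trans with (RInt (fun r => sqrt Bz ^ n * INR n * r ^ (n - 1)) 0 t).
    - apply RInt_le. lra. apply Fi_exRInt. apply exRc. intros. apply cont_mult. apply cont_const. apply cont_pow, cont_id.
      intros r Hr. apply Fi_small. unfold n; lia. lra. auto.
    - rewrite RInt_pow_n by (unfold n; lia). rewrite <- Rpow_mult_distr. apply pow_incr.
      split; auto. apply Rmult_le_pos. apply sqrt_pos. lra. }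
  assert (U2 : RInt (Fi n) t (sqrt snr) <= T).
  { apply Rle_trans with (RInt (fun r => C * (sqrt r ^ S k / r)) t (sqrt snr)).
    - apply RInt_le. lra. apply Fi_exRInt.
      apply exRc. intros z Hz. rewrite Rmin_left, Rmax_right in Hz by lra.
      apply cont_mult. apply cont_const. apply Uk_cont. lra.
      intros r Hr. unfold C, a0, a2. apply Fi_upper. lra.
    - rewrite RInt_Uc by (lia || lra). rewrite Hsqs, ET.
      assert (0 <= sqrt t ^ S k) by (apply pow_le, sqrt_pos).
      assert (0 < C * (2 / INR (S k))) by (apply Rmult_lt_0_compat; auto; apply Rdiv_lt_0_compat; lra).
      nra. }
  assert (Hup : alpha snr n <= a0 ^ n + T).
  { rewrite alpha_E, (RInt_Fi_split n t). lra. }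
  set (r0 := ts * ts * sqrt snr).
  assert (Hr0 : 0 < r0 <= sqrt snr).
  { unfold r0. split. apply Rmult_lt_0_compat. nra. lra.
    assert (ts * ts <= 1) by nra. nra. }
  assert (Hsr0 : sqrt r0 = ts * Qs).
  { unfold r0, Qs. rewrite sqrt_mult by nra. rewrite sqrt_square by lra. reflexivity. }
  set (y := Bm / (th ^ 2 * snr)).
  assert (Hth2 : 0 < th ^ 2) by (apply pow_lt; auto).
  assert (Hu : 0 < snr / INR n) by (apply Rdiv_lt_0_compat; lra).
  assert (Hny : INR n * y <= e / 4).
  { assert (E : INR n * y = (Bm / th ^ 2) / (snr / INR n)) by (unfold y; field; nz).
    rewrite E. apply div_le_helper; auto.
    assert (E2 : 4 * Bm / (e * th ^ 2) = (4 / e) * (Bm / th ^ 2)) by (field; nz).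
    rewrite E2 in HM2.
    assert (H4e : (4 / e) * (Bm / th ^ 2) * (e / 4) = Bm / th ^ 2) by (field; nz).
    assert (0 < e / 4) by lra.
    rewrite <- H4e. rewrite (Rmult_comm (e / 4)). apply Rmult_le_compat_r; lra. }
  assert (Hy0 : 0 <= y) by (unfold y; apply Rdiv_le_0_compat; [auto| apply Rmult_lt_0_compat; lra]).
  assert (Hy1 : y <= 1) by (assert (y <= INR n * y) by nra; lra).
  assert (Hlow1 : (1 - INR n * y) * (C * (2 / INR (S k)) * (Qs ^ S k - (ts * Qs) ^ S k)) <= RInt (Fi n) r0 (sqrt snr)).
  { rewrite <- Hsr0, <- Hsqs. 
    replace ((1 - INR n * y) * (C * (2 / INR (S k)) * (sqrt (sqrt snr) ^ S k - sqrt r0 ^ S k)))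
      with (((1 - INR n * y) * C) * (2 / INR (S k) * (sqrt (sqrt snr) ^ S k - sqrt r0 ^ S k))) by ring.
    rewrite <- RInt_Uc by (lia || lra).
    apply RInt_le. lra.
    apply exRc. intros z Hz. rewrite Rmin_left, Rmax_right in Hz by lra.
    apply cont_mult. apply cont_const. apply Uk_cont. lra.
    apply Fi_exRInt.
    intros r Hr. 
    assert (Hby : Bm / r ^ 2 <= y).
    { unfold y. assert (Hr2 : th ^ 2 * snr <= r ^ 2).
      { replace (th ^ 2 * snr) with (r0 ^ 2). apply pow_incr; lra.
        unfold r0, th. rewrite <- (pow2_sqrt snr) at 2 by lra. ring. }
      unfold Rdiv. apply Rmult_le_compat_l; auto. apply Rinv_le_contravar; auto. nra. }
    assert (HF := Fi_lower (S k) r y ltac:(lra) Hby Hy1).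
    fold n in HF. unfold C, a0, a2. lra. }
  assert (Hlow0 : 0 <= RInt (Fi n) 0 r0).
  { apply RInt_ge_0. lra. apply Fi_exRInt. intros; apply Fi_ge0; lra. }
  assert (Hlow : (1 - INR n * y) * (T * (1 - ts)) <= alpha snr n).
  { rewrite alpha_E, (RInt_Fi_split n r0).
    assert (Hts1 : ts ^ S k <= ts).
    { simpl. assert (ts ^ k <= 1) by (apply pow_le_1; lra). assert (0 <= ts ^ k) by (apply pow_le; lra). nra. }
    assert (Hny1 : 0 <= 1 - INR n * y) by lra.
    assert (Hq : (1 - INR n * y) * (T * (1 - ts)) <= (1 - INR n * y) * (C * (2 / INR (S k)) * (Qs ^ S k - (ts * Qs) ^ S k))).
    { apply Rmult_le_compat_l; auto. rewrite ET. rewrite Rpow_mult_distr.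
      assert (0 < C * (2 / INR (S k)) * Qs ^ S k) by (rewrite <- ET; auto).
      replace (C * (2 / INR (S k)) * (Qs ^ S k - ts ^ S k * Qs ^ S k)) with (C * (2 / INR (S k)) * Qs ^ S k * (1 - ts ^ S k)) by ring.
      apply Rmult_le_compat_l; lra. }
    lra. }
  assert (Hsmall : a0 ^ n < e * T).
  { rewrite ET. unfold C.
    assert (Hpa : 0 < a0 ^ S (S k)) by (apply pow_lt; auto).
    assert (En : a0 ^ n = a0 * a0 ^ S (S k)) by (unfold n; simpl; ring).
    rewrite En.
    assert (HnK : 1 <= INR n / INR (S k)) by (apply Rmult_le_reg_r with (INR (S k)); auto; unfold Rdiv; rewrite Rmult_assoc, Rinv_l; lra).
    assert (HW2 : a0 < 2 * a2 * e * W).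
    { unfold W. replace (2 * a2 * e * (a0 / (2 * a2 * e) + 1)) with (a0 + 2 * a2 * e) by (field; nz). nra. }
    assert (H3 : 2 * a2 * e * W <= 2 * a2 * e * (INR n / INR (S k)) * Qs ^ S k).
    { assert (0 < 2 * a2 * e) by nra.
      assert (W <= (INR n / INR (S k)) * Qs ^ S k) by nra.
      replace (2 * a2 * e * (INR n / INR (S k)) * Qs ^ S k) with (2 * a2 * e * ((INR n / INR (S k)) * Qs ^ S k)) by ring.
      apply Rmult_le_compat_l; lra. }
    replace (e * (a0 ^ S (S k) * a2 * INR n * (2 / INR (S k)) * Qs ^ S k)) with
      (a0 ^ S (S k) * (2 * a2 * e * (INR n / INR (S k)) * Qs ^ S k)) by (field; lra).
    rewrite (Rmult_comm a0). apply Rmult_lt_compat_l; auto. lra. }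
  assert (Hq1 : alpha snr n / T <= 1 + a0 ^ n / T).
  { apply Rmult_le_reg_r with T; auto. unfold Rdiv. rewrite Rmult_plus_distr_r, !Rmult_assoc, Rinv_l by lra. lra. }
  assert (Hq2 : a0 ^ n / T < e).
  { apply Rmult_lt_reg_r with T; auto. unfold Rdiv. rewrite Rmult_assoc, Rinv_l by lra. lra. }
  assert (Hq3 : (1 - INR n * y) * (1 - ts) <= alpha snr n / T).
  { apply le_div_helper; auto. replace ((1 - INR n * y) * (1 - ts) * T) with ((1 - INR n * y) * (T * (1 - ts))) by ring. lra. }
  assert (Hq4 : 1 - e / 2 <= (1 - INR n * y) * (1 - ts)).
  { assert (1 - e / 4 <= 1 - INR n * y) by lra. assert (1 - e / 4 <= 1 - ts) by (unfold ts; lra).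
    assert ((1 - e / 4) * (1 - e / 4) <= (1 - INR n * y) * (1 - ts)) by (apply Rmult_le_compat; lra).
    nra. }
  apply Rabs_lt_between. split; lra.
Qed.


Lemma ln_sqrt_half x : 0 < x -> ln (sqrt x) = ln x / 2.
Proof.
  intros Hx. assert (Hs : 0 < sqrt x) by (apply sqrt_lt_R0; auto).
  assert (E : ln x = ln (sqrt x * sqrt x)) by (rewrite sqrt_sqrt; lra).
  rewrite E, ln_mult by auto. field.
Qed.

Lemma part_n2 : forall eps : R, 0 < eps -> exists M : R, forall snr : R, M < snr ->
       Rabs (alpha snr 2 / (sqrt A0 ^ 1 * sqrt A2 * ln snr) - 1) < eps.
Proof.
  intros eps He.
  set (e := Rmin eps 1).
  assert (He1 : 0 < e /\ e <= eps /\ e <= 1) by (unfold e; split; [apply Rmin_glb_lt; lra| split; [apply Rmin_l|apply Rmin_r]]).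
  destruct He1 as [He0 [Hee He1]].
  destruct zeta_ub as [Bz [HBz HzB]].
  assert (HA0 := A0_pos). assert (HA2 := A2_pos).
  set (a0 := sqrt A0). set (a2 := sqrt A2).
  assert (Ha0 : 0 < a0) by (apply sqrt_lt_R0; auto).
  assert (Ha2 : 0 < a2) by (apply sqrt_lt_R0; auto).
  assert (HBm := Bm_ge0).
  set (R1 := sqrt (8 * Bm / e) + 1).
  assert (HR1 : 1 <= R1) by (unfold R1; assert (H := sqrt_pos (8 * Bm / e)); lra).
  assert (HR1b : 8 * Bm / e <= R1 ^ 2).
  { unfold R1. assert (H := sqrt_pos (8 * Bm / e)).
    assert (E : sqrt (8 * Bm / e) * sqrt (8 * Bm / e) = 8 * Bm / e) by (apply sqrt_sqrt; apply Rdiv_le_0_compat; lra).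
    simpl. nra. }
  set (y := Bm / R1 ^ 2).
  assert (HR12 : 0 < R1 ^ 2) by (apply pow_lt; lra).
  assert (Hy : 2 * y <= e / 4).
  { unfold y. apply Rmult_le_reg_r with (R1 ^ 2); auto. unfold Rdiv. rewrite (Rmult_assoc 2), Rmult_assoc, Rinv_l by lra.
    apply Rmult_le_compat_l with (r := e / 4) in HR1b; [|lra].
    replace (e / 4 * (8 * Bm / e)) with (2 * Bm) in HR1b by (field; lra). lra. }
  assert (Hy0 : 0 <= y) by (unfold y; apply Rdiv_le_0_compat; lra).
  assert (HlnR : 0 <= ln R1) by (rewrite <- ln_1; destruct HR1 as [H|H]; [left; apply ln_increasing; lra | right; rewrite H; reflexivity]).
  set (K2 := a0 ^ 1 * a2).
  assert (HK2 : 0 < K2) by (unfold K2; simpl; nra).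
  set (L0 := Bz / (K2 * e) + 8 * ln R1 / e + 1).
  assert (HL0 : 0 < L0) by (unfold L0; assert (0 < Bz / (K2 * e)) by (apply Rdiv_lt_0_compat; nra);
    assert (0 <= 8 * ln R1 / e) by (apply Rdiv_le_0_compat; lra); lra).
  exists (Rmax (R1 ^ 2) (exp L0)).
  intros snr Hs.
  assert (Hs1 : R1 ^ 2 < snr) by (eapply Rle_lt_trans; [apply Rmax_l|exact Hs]).
  assert (Hs2 : exp L0 < snr) by (eapply Rle_lt_trans; [apply Rmax_r|exact Hs]).
  assert (Hsp : 0 < snr) by (assert (H := exp_pos L0); lra).
  assert (Hln : L0 < ln snr) by (rewrite <- (ln_exp L0); apply ln_increasing; auto; apply exp_pos).
  assert (HsqR : R1 < sqrt snr).
  { rewrite <- (sqrt_pow2 R1) by lra. apply sqrt_lt_1_alt. split; lra. }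
  assert (Hlns : ln (sqrt snr) = ln snr / 2) by (apply ln_sqrt_half; auto).
  set (D := K2 * ln snr).
  assert (HD : 0 < D) by (unfold D; apply Rmult_lt_0_compat; lra).
  replace (sqrt A0 ^ 1 * sqrt A2 * ln snr) with D by reflexivity.
  assert (U1 : RInt (Fi 2) 0 1 <= Bz).
  { apply Rle_trans with (RInt (fun r => sqrt Bz ^ 2 * INR 2 * r ^ (2 - 1)) 0 1).
    - apply RInt_le. lra. apply Fi_exRInt. apply exRc. intros. apply cont_mult. apply cont_const. apply cont_pow, cont_id.
      intros r Hr. apply Fi_small. lia. lra. auto.
    - rewrite RInt_pow_n by lia. rewrite pow2_sqrt by lra. lra. }
  assert (U2 : RInt (Fi 2) 1 (sqrt snr) <= D).
  { apply Rle_trans with (RInt (fun r => (K2 * INR 2) * (sqrt r ^ 0 / r)) 1 (sqrt snr)).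
    - apply RInt_le. lra. apply Fi_exRInt.
      apply exRc. intros z Hz. rewrite Rmin_left, Rmax_right in Hz by lra.
      apply cont_mult. apply cont_const. apply Uk_cont. lra.
      intros r Hr. unfold K2, a0, a2. apply (Fi_upper 0). lra.
    - rewrite RInt_scal_R. rewrite RInt_U0 by lra. rewrite ln_1, Hlns. unfold D. simpl. lra.
      apply exRc. intros z Hz. rewrite Rmin_left, Rmax_right in Hz by lra. apply Uk_cont. lra. }
  assert (Hup : alpha snr 2 <= Bz + D) by (rewrite alpha_E, (RInt_Fi_split 2 1); lra).
  assert (L1 : (1 - 2 * y) * (K2 * (ln snr - 2 * ln R1)) <= RInt (Fi 2) R1 (sqrt snr)).
  { apply Rle_trans with (RInt (fun r => ((1 - INR 2 * y) * (K2 * INR 2)) * (sqrt r ^ 0 / r)) R1 (sqrt snr)).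
    - rewrite RInt_scal_R. rewrite RInt_U0 by lra. rewrite Hlns. simpl. right. field.
      apply exRc. intros z Hz. rewrite Rmin_left, Rmax_right in Hz by lra. apply Uk_cont. lra.
    - apply RInt_le. lra.
      apply exRc. intros z Hz. rewrite Rmin_left, Rmax_right in Hz by lra.
      apply cont_mult. apply cont_const. apply Uk_cont. lra.
      apply Fi_exRInt.
      intros r Hr.
      assert (Hby : Bm / r ^ 2 <= y).
      { unfold y. unfold Rdiv. apply Rmult_le_compat_l; auto. apply Rinv_le_contravar; auto. apply pow_incr; lra. }
      assert (HF := Fi_lower 0 r y ltac:(lra) Hby ltac:(lra)).
      unfold K2, a0, a2. replace (INR 2) with (INR (S (S 0))) by reflexivity. lra. }
  assert (L0' : 0 <= RInt (Fi 2) 0 R1).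
  { apply RInt_ge_0. lra. apply Fi_exRInt. intros; apply Fi_ge0; lra. }
  assert (Hlow : (1 - 2 * y) * (K2 * (ln snr - 2 * ln R1)) <= alpha snr 2) by (rewrite alpha_E, (RInt_Fi_split 2 R1); lra).
  assert (Hq1 : alpha snr 2 / D <= 1 + Bz / D).
  { apply div_le_helper; auto. replace ((1 + Bz / D) * D) with (D + Bz) by (field; lra). lra. }
  assert (Hq2 : Bz / D < e).
  { apply Rmult_lt_reg_r with D; auto. unfold Rdiv. rewrite Rmult_assoc, Rinv_l by lra.
    unfold D. assert (Bz / (K2 * e) < ln snr) by (unfold L0 in Hln; assert (0 <= 8 * ln R1 / e) by (apply Rdiv_le_0_compat; lra); lra).
    apply Rmult_lt_compat_l with (r := K2 * e) in H; [|nra].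
    replace (K2 * e * (Bz / (K2 * e))) with Bz in H by (field; nz). lra. }
  assert (Hq3 : (1 - 2 * y) * (1 - 2 * ln R1 / ln snr) <= alpha snr 2 / D).
  { apply le_div_helper; auto. unfold D.
    replace ((1 - 2 * y) * (1 - 2 * ln R1 / ln snr) * (K2 * ln snr)) with ((1 - 2 * y) * (K2 * (ln snr - 2 * ln R1))) by (field; lra).
    lra. }
  assert (Hq4 : 2 * ln R1 / ln snr <= e / 4).
  { apply div_le_helper. lra. unfold L0 in Hln.
    assert (8 * ln R1 / e < ln snr) by (assert (0 < Bz / (K2 * e)) by (apply Rdiv_lt_0_compat; nra); lra).
    apply Rmult_lt_compat_l with (r := e / 4) in H; [|lra].
    replace (e / 4 * (8 * ln R1 / e)) with (2 * ln R1) in H by (field; lra). lra. }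
  assert (Hq5 : 1 - e / 2 <= (1 - 2 * y) * (1 - 2 * ln R1 / ln snr)).
  { assert ((1 - e / 4) * (1 - e / 4) <= (1 - 2 * y) * (1 - 2 * ln R1 / ln snr)) by (apply Rmult_le_compat; lra).
    nra. }
  apply Rabs_lt_between. split; lra.
Qed.

Lemma Conv_d32 : Conv (fun x => / ((1 + x) * sqrt (1 + x))).
Proof.
  assert (Hc : Cont0 (fun x => / ((1 + x) * sqrt (1 + x)))).
  { intros x Hx. apply cont_inv. apply cont_mult. apply cont_plus. apply cont_const. apply cont_id.
    apply continuous_sqrt_comp. apply cont_plus. apply cont_const. apply cont_id.
    assert (0 < sqrt (1 + x)) by (apply sqrt_lt_R0; lra). nz. nra. }
  assert (HR : forall b, 0 <= b -> RInt (fun x => / ((1 + x) * sqrt (1 + x))) 0 b = 2 - 2 / sqrt (1 + b)).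
  { intros b Hb. apply is_RInt_unique.
    replace (2 - 2 / sqrt (1 + b)) with (minus ((fun x => - 2 / sqrt (1 + x)) b) ((fun x => - 2 / sqrt (1 + x)) 0))
      by (unfold minus, plus, opp; simpl; rewrite Rplus_0_r, sqrt_1; change (-2 / sqrt (1 + b) + - (-2 / 1) = 2 - 2 / sqrt (1 + b)); field;
          apply Rgt_not_eq, sqrt_lt_R0; lra).
    apply (is_RInt_derive (V:=R_CompleteNormedModule) (fun x => - 2 / sqrt (1 + x)) (fun x => / ((1 + x) * sqrt (1 + x)))).
    - intros x Hx. rewrite Rmin_left, Rmax_right in Hx by lra.
      assert (Hs : 0 < sqrt (1 + x)) by (apply sqrt_lt_R0; lra).
      auto_derive. nz.
      assert (E : 1 + x = sqrt (1 + x) * sqrt (1 + x)) by (rewrite sqrt_sqrt; lra).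
      set (s := sqrt (1 + x)) in *. clearbody s. rewrite E. field. nz.
    - intros x Hx. rewrite Rmin_left, Rmax_right in Hx by lra. apply Hc; lra. }
  assert (Hl : is_lim (fun b => RInt (fun x => / ((1 + x) * sqrt (1 + x))) 0 b) p_infty 2).
  { apply is_lim_p_intro. intros eps He. exists (4 / (eps * eps)). intros x Hx.
    assert (Hx0 : 0 < x) by (apply Rlt_trans with (4 / (eps * eps)); auto; apply Rdiv_lt_0_compat; nra).
    rewrite HR by lra.
    assert (Hs : 0 < sqrt (1 + x)) by (apply sqrt_lt_R0; lra).
    replace (2 - 2 / sqrt (1 + x) - 2) with (- (2 / sqrt (1 + x))) by ring.
    rewrite Rabs_Ropp, Rabs_right by (apply Rle_ge, Rdiv_le_0_compat; lra).
    assert (H2 : 2 / eps < sqrt (1 + x)).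
    { rewrite <- (sqrt_pow2 (2 / eps)) by (apply Rdiv_le_0_compat; lra). apply sqrt_lt_1_alt.
      split. apply pow2_ge_0. replace ((2 / eps) ^ 2) with (4 / (eps * eps)) by (field; lra). lra. }
    apply Rmult_lt_reg_r with (sqrt (1 + x)); auto. unfold Rdiv. rewrite Rmult_assoc, Rinv_l by lra.
    apply Rmult_lt_compat_l with (r := eps) in H2; auto.
    replace (eps * (2 / eps)) with 2 in H2 by (field; lra). lra. }
  split; auto. exists 2; auto.
Qed.

Lemma sqrt2_lt : sqrt 2 < 3 / 2.
Proof.
  rewrite <- (sqrt_pow2 (3/2)) by lra. apply sqrt_lt_1_alt. lra.
Qed.

Lemma Conv_sz2 : Conv (fun r => sqrt (zeta 2 r)).
Proof.
  destruct zeta_ub as [Bz [HBz HzB]].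
  assert (HA2 := A2_pos).
  assert (Hc : Cont0 (fun r => sqrt (zeta 2 r))) by (intros x _; apply continuous_sqrt_comp, zeta_cont; auto).
  apply Conv_dom with (g := fun x => (3 * (sqrt A2 + sqrt Bz)) * / ((1 + x) * sqrt (1 + x))); auto.
  - apply Conv_scal, Conv_d32.
  - intros x Hx. rewrite Rabs_right by (apply Rle_ge, sqrt_pos).
    assert (Hs2 := sqrt2_lt). assert (Hsa := sqrt_pos A2). assert (Hsb := sqrt_pos Bz).
    assert (Hsx : 0 < sqrt (1 + x)) by (apply sqrt_lt_R0; lra).
    assert (HD : 0 < (1 + x) * sqrt (1 + x)) by nra.
    destruct (Rle_or_lt x 1) as [H1|H1].
    + assert (Hz : sqrt (zeta 2 x) <= sqrt Bz) by (apply sqrt_le_1_alt; apply HzB; auto).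
      assert (Hsq : sqrt (1 + x) <= sqrt 2) by (apply sqrt_le_1_alt; lra).
      assert (Hb : (1 + x) * sqrt (1 + x) <= 3) by nra.
      apply Rle_trans with (sqrt Bz); auto.
      apply Rmult_le_reg_r with ((1 + x) * sqrt (1 + x)); auto.
      rewrite Rmult_assoc, Rinv_l by lra. nra.
    + assert (Hz := Fi_upper). clear Hz.
      assert (Hr : 0 < x) by lra.
      assert (Hsr : 0 < sqrt x) by (apply sqrt_lt_R0; lra).
      assert (H2 : sqrt (zeta 2 x) <= sqrt A2 / (x * sqrt x)).
      { assert (E : x * sqrt x = sqrt (x ^ 3)).
        { replace (x ^ 3) with ((x * x) * x) by ring. rewrite sqrt_mult by nra. rewrite sqrt_square by lra. reflexivity. }
        rewrite E. rewrite <- sqrt_div by (try lra; apply pow_lt; auto).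
        apply sqrt_le_1_alt. apply z2_up; auto. }
      assert (Hsq : sqrt (1 + x) <= 3 / 2 * sqrt x).
      { apply Rle_trans with (sqrt (2 * x)). apply sqrt_le_1_alt; lra.
        rewrite sqrt_mult by lra. apply Rmult_le_compat_r; lra. }
      assert (Hb : (1 + x) * sqrt (1 + x) <= 3 * (x * sqrt x)) by nra.
      apply Rle_trans with (sqrt A2 / (x * sqrt x)); auto.
      apply Rmult_le_reg_r with ((1 + x) * sqrt (1 + x)); auto.
      rewrite Rmult_assoc, Rinv_l by lra.
      unfold Rdiv. apply Rle_trans with (sqrt A2 * / (x * sqrt x) * (3 * (x * sqrt x))).
      apply Rmult_le_compat_l; auto. apply Rmult_le_pos; auto. left; apply Rinv_0_lt_compat; nra.
      replace (sqrt A2 * / (x * sqrt x) * (3 * (x * sqrt x))) with (3 * sqrt A2) by (field; nz; nra). nra.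
Qed.

Lemma part_n1 : forall eps : R, 0 < eps -> exists M : R, forall snr : R, M < snr ->
       Rabs (alpha snr 1 /
             RInt_gen (fun r => sqrt (zeta 2 r)) (at_point 0) (Rbar_locally p_infty)
             - 1) < eps.
Proof.
  intros eps He.
  change (RInt_gen (fun r => sqrt (zeta 2 r)) (at_point 0) (Rbar_locally p_infty)) with (Ip (fun r => sqrt (zeta 2 r))).
  set (L := Ip (fun r => sqrt (zeta 2 r))).
  assert (HL : 0 < L).
  { apply Rlt_le_trans with (RInt (fun r => sqrt (zeta 2 r)) 0 1).
    - apply RInt_gt_0. lra. intros x _. apply sqrt_lt_R0, zeta_pos; auto.
      intros x _. apply continuous_sqrt_comp, zeta_cont; auto.
    - apply Ip_ge_RInt. apply Conv_sz2. intros; apply sqrt_pos. lra. }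
  destruct (lim_p_eps _ _ (Ip_lim _ Conv_sz2) (eps * L)) as [M HM]. nra.
  exists (Rmax M 0 ^ 2). intros snr Hs.
  assert (HM0 := Rmax_r M 0). assert (HMM := Rmax_l M 0).
  assert (Hsq : Rmax M 0 < sqrt snr).
  { rewrite <- (sqrt_pow2 (Rmax M 0)) by lra. apply sqrt_lt_1_alt. split. apply pow2_ge_0. lra. }
  assert (E : alpha snr 1 = RInt (fun r => sqrt (zeta 2 r)) 0 (sqrt snr)).
  { rewrite alpha_E. apply RInt_ext. intros x _. unfold Fi. simpl. ring. }
  specialize (HM (sqrt snr) ltac:(lra)). fold L in HM. rewrite <- E in HM.
  replace (alpha snr 1 / L - 1) with ((alpha snr 1 - L) / L) by (field; lra).
  unfold Rdiv. rewrite Rabs_mult, (Rabs_right (/ L)) by (left; apply Rinv_0_lt_compat; lra).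
  apply Rmult_lt_reg_r with L; auto. rewrite Rmult_assoc, Rinv_l by lra. lra.
Qed.


Theorem proposition2 :
  (* (i) joint regime n * snr -> 0 *)
  (forall eps : R, 0 < eps -> exists delta : R, 0 < delta /\
     forall (n : nat) (snr : R), (1 <= n)%nat -> 0 < snr -> INR n * snr < delta ->
       Rabs (alpha snr n / (sqrt (2 / PI * snr)) ^ n - 1) < eps)
  /\
  (* (ii), n = 1 *)
  (forall eps : R, 0 < eps -> exists M : R, forall snr : R, M < snr ->
       Rabs (alpha snr 1 /
             RInt_gen (fun r => sqrt (zeta 2 r)) (at_point 0) (Rbar_locally p_infty)
             - 1) < eps)
  /\
  (* (ii), n = 2 *)
  (forall eps : R, 0 < eps -> exists M : R, forall snr : R, M < snr ->
       Rabs (alpha snr 2 / (sqrt A0 ^ 1 * sqrt A2 * ln snr) - 1) < eps)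
  /\
  (* (ii), n >= 3, joint regime snr / n -> oo *)
  (forall eps : R, 0 < eps -> exists M : R, forall (n : nat) (snr : R),
       (3 <= n)%nat -> 0 < snr -> M < snr / INR n ->
       Rabs (alpha snr n /
             (2 * INR n / (INR n - 2) * sqrt A0 ^ (n - 1) * sqrt A2
              * Rpower snr ((INR n - 2) / 4)) - 1) < eps).
Proof.
  split. exact part1.
  split. exact part_n1.
  split. exact part_n2.
  exact part_n3.
Qed.
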